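(* Let $\alpha,\beta\in\mathbb{R}$ with $\alpha>1$, where $\alpha$ is irrational and of finite type, and let $k\geqslant 2$ be an integer. Then for integers $N\geqslant 3$, $$ \#\{n\leqslant N : n\in\mathcal{B}_{\alpha,\beta},\ n \text{ is } k\text{-free}\}=\alpha^{-1}\zeta(k)^{-1}N+O\!\left(\frac{N\log\log N}{\log N}\right), $$ where $\zeta$ is the Riemann zeta function and the implied constant depends only on $\alpha$.
   Context: An integer $n$ is $k$-free if $p^k\nmid n$ for every prime $p$. The non-homogeneous Beatty sequence is $\mathcal{B}_{\alpha,\beta}=\{n\in\mathbb{N} : n=\lfloor \alpha m+\beta\rfloor \text{ for some } m\in\mathbb{Z}\}$. For an irrational number $\gamma$, its type is $\tau=\sup\{t\in\mathbb{R} : \liminf_{n\to\infty} n^t \|\gamma n\| = 0\}$, where $\|x\|$ is the distance from $x$ to the nearest integer; $\gamma$ is of finite type if $\tau<\infty$. *)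

(* Defs.v *)
From Stdlib Require Import Reals Lra Lia ZArith Znumtheory List ClassicalEpsilon.
From Coquelicot Require Import Coquelicot.
Open Scope R_scope.

(* floor x : the greatest integer <= x  (Stdlib's Int_part is the floor) *)
Definition rfloor (x : R) : Z := Int_part x.

Definition dist_nint (x : R) : R :=
  Rmin (x - IZR (rfloor x)) (IZR (rfloor x) + 1 - x).

Definition irrational (x : R) : Prop :=
  forall (p q : Z), q <> 0%Z -> x <> IZR p / IZR q.

(* liminf_{n -> oo} n^t ||gamma n|| = 0  (the sequence is nonnegative, so this
   means: for every eps > 0, n^t ||gamma n|| < eps for infinitely many n) *)
Definition liminf_zero (gamma t : R) : Prop :=
  forall eps : R, eps > 0 -> forall M : nat, exists n : nat,
    (M <= n)%nat /\ (1 <= n)%nat /\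
    Rpower (INR n) t * dist_nint (gamma * INR n) < eps.

(* gamma is of finite type: tau = sup {t | liminf n^t ||gamma n|| = 0} < oo,
   i.e. this (nonempty) set is bounded above. *)
Definition finite_type (gamma : R) : Prop :=
  exists T : R, forall t : R, liminf_zero gamma t -> t <= T.

Definition kfree (k : nat) (n : Z) : Prop :=
  forall p : Z, prime p -> ~ Z.divide (p ^ Z.of_nat k) n.

Definition in_beatty (alpha beta : R) (n : Z) : Prop :=
  (1 <= n)%Z /\ exists m : Z, n = rfloor (alpha * IZR m + beta).

Definition indic (P : Prop) : nat :=
  if excluded_middle_informative P then 1%nat else 0%nat.

Definition count_kfree_beatty (alpha beta : R) (k N : nat) : nat :=
  fold_right Nat.add 0%nat
    (map (fun n : nat => indic (in_beatty alpha beta (Z.of_nat n) /\ kfree k (Z.of_nat n)))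
         (seq 1 N)).

Definition zeta_nat (k : nat) : R := Series (fun n : nat => / (INR (n + 1)) ^ k).

(* Main.v *)
Require Import Defs.
From Stdlib Require Import Reals ZArith.
From Coquelicot Require Import Coquelicot.
From Stdlib Require Import Reals Lra Lia ZArith Znumtheory List Classical ClassicalEpsilon Wf_nat.
Open Scope R_scope.

Module P1.
Local Open Scope R_scope.

Lemma fl_spec x : IZR (rfloor x) <= x < IZR (rfloor x) + 1.
Proof. unfold rfloor. destruct (base_Int_part x). lra. Qed.

Lemma fl_unique x z : IZR z <= x < IZR z + 1 -> rfloor x = z.
Proof. intros H. unfold rfloor. symmetry. apply Int_part_spec. lra. Qed.

Lemma fl_addZ x n : rfloor (x + IZR n) = (rfloor x + n)%Z.
Proof. apply fl_unique. rewrite plus_IZR. pose proof (fl_spec x). lra. Qed.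

Lemma fl_IZR n : rfloor (IZR n) = n.
Proof. apply fl_unique. lra. Qed.

Lemma fl_mono x y : x <= y -> (rfloor x <= rfloor y)%Z.
Proof.
  intros H. pose proof (fl_spec x). pose proof (fl_spec y).
  destruct (Z_le_gt_dec (rfloor x) (rfloor y)); auto.
  assert (rfloor y + 1 <= rfloor x)%Z by lia. apply IZR_le in H2. rewrite plus_IZR in H2. lra.
Qed.

Lemma fl_le_of x z : IZR z <= x -> (z <= rfloor x)%Z.
Proof. intros H. rewrite <- (fl_IZR z). now apply fl_mono. Qed.

Lemma fl_lt_of x z : x < IZR z -> (rfloor x < z)%Z.
Proof. intros H. pose proof (fl_spec x).
  destruct (Z_lt_ge_dec (rfloor x) z); auto. apply Z.ge_le, IZR_le in g. lra. Qed.

Lemma fl_div x q : (0 < q)%Z -> rfloor (x / IZR q) = Z.div (rfloor x) q.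
Proof.
  intros Hq. apply fl_unique. pose proof (fl_spec x).
  pose proof (Z.div_mod (rfloor x) q ltac:(lia)).
  pose proof (Z.mod_pos_bound (rfloor x) q Hq).
  set (d := (rfloor x / q)%Z) in *. set (r := (rfloor x mod q)%Z) in *.
  assert (Hq' : 0 < IZR q) by (apply IZR_lt; lia).
  assert (E : IZR (rfloor x) = IZR q * IZR d + IZR r) by (rewrite H0; rewrite plus_IZR, mult_IZR; ring).
  assert (0 <= IZR r) by (apply IZR_le; lia).
  assert (IZR r + 1 <= IZR q) by (rewrite <- plus_IZR; apply IZR_le; lia).
  split.
  - apply Rmult_le_reg_r with (IZR q); auto. unfold Rdiv. rewrite Rmult_assoc, Rinv_l by lra. nra.
  - apply Rmult_lt_reg_r with (IZR q); auto. unfold Rdiv. rewrite Rmult_assoc, Rinv_l by lra. nra.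
Qed.

Fixpoint sumR (f : nat -> R) (n : nat) : R :=
  match n with O => 0 | S n => sumR f n + f n end.

Lemma sumR_ext f g n : (forall i, (i < n)%nat -> f i = g i) -> sumR f n = sumR g n.
Proof. induction n; simpl; intros H; auto. rewrite IHn by (intros; apply H; lia). rewrite H by lia. auto. Qed.

Lemma sumR_plus f g n : sumR (fun i => f i + g i) n = sumR f n + sumR g n.
Proof. induction n; simpl; [lra|rewrite IHn; lra]. Qed.

Lemma sumR_minus f g n : sumR (fun i => f i - g i) n = sumR f n - sumR g n.
Proof. induction n; simpl; [lra|rewrite IHn; lra]. Qed.

Lemma sumR_scal c f n : sumR (fun i => c * f i) n = c * sumR f n.
Proof. induction n; simpl; [lra|rewrite IHn; lra]. Qed.

Lemma sumR_const c n : sumR (fun _ => c) n = INR n * c.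
Proof. induction n; simpl sumR; [simpl; lra|rewrite IHn, S_INR; lra]. Qed.

Lemma sumR_le f g n : (forall i, (i < n)%nat -> f i <= g i) -> sumR f n <= sumR g n.
Proof. induction n; simpl; intros H; [lra|]. pose proof (H n ltac:(lia)).
  assert (sumR f n <= sumR g n) by (apply IHn; intros; apply H; lia). lra. Qed.

Lemma sumR_abs f n : Rabs (sumR f n) <= sumR (fun i => Rabs (f i)) n.
Proof. induction n; simpl; [rewrite Rabs_R0; lra|]. pose proof (Rabs_triang (sumR f n) (f n)). lra. Qed.

Lemma sumR_nonneg f n : (forall i, (i < n)%nat -> 0 <= f i) -> 0 <= sumR f n.
Proof. intros H. replace 0 with (sumR (fun _ => 0) n). apply sumR_le; auto.
  rewrite sumR_const; lra. Qed.

Lemma sumR_split f n m : sumR f (n + m) = sumR f n + sumR (fun i => f (n + i)%nat) m.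
Proof. induction m; simpl. rewrite Nat.add_0_r; lra. rewrite Nat.add_succ_r. simpl. rewrite IHm. lra. Qed.

Lemma sumR_swap (f : nat -> nat -> R) n m :
  sumR (fun i => sumR (fun j => f i j) m) n = sumR (fun j => sumR (fun i => f i j) n) m.
Proof.
  induction n; simpl. rewrite sumR_const; simpl; lra.
  rewrite IHn. rewrite <- sumR_plus. auto.
Qed.

Lemma sumR_shift f n : sumR f (S n) = f O + sumR (fun i => f (S i)) n.
Proof. induction n. simpl; lra. change (sumR f (S (S n))) with (sumR f (S n) + f (S n)). rewrite IHn. simpl. lra. Qed.

Lemma Rabs_le_inv2 x y : Rabs x <= y -> - y <= x <= y.
Proof. unfold Rabs. destruct (Rcase_abs x); lra. Qed.

Lemma sumR_S f n : sumR f (S n) = sumR f n + f n.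
Proof. reflexivity. Qed.

Lemma sumR_scal_r c f n : sumR (fun i => f i * c) n = sumR f n * c.
Proof. induction n; simpl; [lra|rewrite IHn; lra]. Qed.

Lemma le_div a b c : 0 < c -> a * c <= b -> a <= b / c.
Proof. intros Hc H. apply Rmult_le_reg_r with c; auto. unfold Rdiv. rewrite Rmult_assoc, Rinv_l by lra. rewrite Rmult_1_r. auto. Qed.

End P1.
Import P1.

Module P2.
Local Open Scope R_scope.

Definition ind (b : bool) : R := if b then 1 else 0.

Lemma sum_ind_unique (P : nat -> bool) n :
  (exists r0, (r0 < n)%nat /\ P r0 = true) ->
  (forall r r', (r < n)%nat -> (r' < n)%nat -> P r = true -> P r' = true -> r = r') ->
  sumR (fun r => ind (P r)) n = 1.
Proof.
  induction n; intros [r0 [Hr0 HP]] Hu. lia.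
  simpl. destruct (Nat.eq_dec r0 n) as [->|Hne].
  - rewrite HP. unfold ind at 2. replace (sumR (fun r => ind (P r)) n) with 0. lra.
    symmetry. replace 0 with (sumR (fun _ => 0) n) by (rewrite sumR_const; lra).
    apply sumR_ext. intros i Hi. unfold ind. destruct (P i) eqn:E; auto.
    assert (i = n) by (apply Hu; auto). lia.
  - assert (IH : sumR (fun r => ind (P r)) n = 1).
    { apply IHn. exists r0; split; auto; lia. intros; apply Hu; auto; lia. }
    rewrite IH. unfold ind. destruct (P n) eqn:E.
    + assert (r0 = n) by (apply Hu; auto; lia). lia.
    + lra.
Qed.

Lemma div_succ_diff x b : (0 < b)%Z ->
  ((x + 1) / b - x / b = if Z.eqb ((x+1) mod b) 0 then 1 else 0)%Z.
Proof.
  intros Hb.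
  pose proof (Z.div_mod x b ltac:(lia)). pose proof (Z.mod_pos_bound x b Hb).
  pose proof (Z.div_mod (x+1) b ltac:(lia)). pose proof (Z.mod_pos_bound (x+1) b Hb).
  destruct (Z.eqb_spec ((x+1) mod b) 0); nia.
Qed.

Lemma Zind_step (g : Z -> R) : (forall n, g (n + 1)%Z = g n + 1) -> forall n, g n = IZR n + g 0%Z.
Proof.
  intros H n. induction n using Z.peano_ind.
  - simpl; lra.
  - rewrite <- Z.add_1_r, H, IHn, plus_IZR. simpl. lra.
  - rewrite <- Z.sub_1_r. pose proof (H (n - 1)%Z). replace (n - 1 + 1)%Z with n in H0 by lia.
    rewrite minus_IZR. simpl. lra.
Qed.

Lemma hermite_int a b : (0 < b)%Z -> Z.gcd a b = 1%Z -> forall n,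
  sumR (fun r => IZR ((n + Z.of_nat r * a) / b)) (Z.to_nat b) =
  IZR n + sumR (fun r => IZR ((Z.of_nat r * a) / b)) (Z.to_nat b).
Proof.
  intros Hb Hg n.
  apply (Zind_step (fun n => sumR (fun r => IZR ((n + Z.of_nat r * a) / b)) (Z.to_nat b))).
  clear n. intros n.
  assert (E : forall r, IZR ((n + 1 + Z.of_nat r * a) / b) = IZR ((n + Z.of_nat r * a) / b) +
      ind (Z.eqb ((n + 1 + Z.of_nat r * a) mod b) 0)).
  { intros r. pose proof (div_succ_diff (n + Z.of_nat r * a) b Hb).
    replace (n + Z.of_nat r * a + 1)%Z with (n + 1 + Z.of_nat r * a)%Z in H by ring.
    unfold ind. destruct (Z.eqb _ 0); [|]; apply (f_equal IZR) in H; rewrite minus_IZR in H; simpl in H; lra. }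
  rewrite (sumR_ext _ (fun r => IZR ((n + Z.of_nat r * a) / b) +
      ind (Z.eqb ((n + 1 + Z.of_nat r * a) mod b) 0))) by (intros; apply E).
  rewrite sumR_plus. f_equal.
  apply sum_ind_unique.
  - destruct (Z.gcd_bezout a b 1 Hg) as [u [v Huv]].
    set (r0 := ((- (n+1) * u) mod b)%Z).
    pose proof (Z.mod_pos_bound (- (n+1) * u) b Hb).
    exists (Z.to_nat r0). split. lia.
    apply Z.eqb_eq. rewrite Z2Nat.id by lia.
    unfold r0. rewrite Z.add_mod by lia. rewrite Z.mul_mod_idemp_l by lia.
    rewrite <- Z.add_mod by lia.
    replace (n + 1 + - (n + 1) * u * a)%Z with ((n+1) * v * b)%Z.
    2:{ assert (Hx : ((n+1)*(u*a+v*b) = n+1)%Z) by (rewrite Huv; ring). lia. }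
    apply Z.mod_mul. lia.
  - intros r r' Hr Hr' H1 H2. apply Z.eqb_eq in H1. apply Z.eqb_eq in H2.
    apply Z.mod_divide in H1; [|lia]. apply Z.mod_divide in H2; [|lia].
    assert (D : (b | (Z.of_nat r - Z.of_nat r') * a)%Z).
    { replace ((Z.of_nat r - Z.of_nat r') * a)%Z with ((n + 1 + Z.of_nat r * a) - (n + 1 + Z.of_nat r' * a))%Z by ring.
      now apply Z.divide_sub_r. }
    assert (rel_prime b a). { apply Zgcd_1_rel_prime. rewrite Z.gcd_comm; auto. }
    rewrite Z.mul_comm in D. apply (Gauss _ _ _ D) in H.
    destruct H as [c Hc].
    assert (c = 0)%Z by nia. subst. lia.
Qed.

Lemma hermite_real y a b : (0 < b)%Z -> Z.gcd a b = 1%Z ->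
  sumR (fun r => IZR (rfloor (y + INR r * IZR a / IZR b))) (Z.to_nat b) =
  IZR (rfloor (IZR b * y)) + sumR (fun r => IZR ((Z.of_nat r * a) / b)) (Z.to_nat b).
Proof.
  intros Hb Hg. rewrite <- hermite_int by auto.
  apply sumR_ext. intros r _. f_equal.
  assert (IZR b <> 0) by (apply not_0_IZR; lia).
  replace (y + INR r * IZR a / IZR b) with ((IZR b * y + IZR (Z.of_nat r * a)) / IZR b).
  rewrite fl_div by auto. rewrite fl_addZ. auto.
  rewrite mult_IZR, <- INR_IZR_INZ. field. auto.
Qed.

End P2.
Import P2.

Module P3.
Local Open Scope R_scope.

Definition Fs (theta z : R) (n : nat) := sumR (fun r => IZR (rfloor (z + INR r * theta))) n.

Lemma block_F theta a b z : (0 < b)%Z -> Z.gcd a b = 1%Z ->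
  Rabs (IZR b * theta - IZR a) <= / IZR b ->
  IZR (rfloor (IZR b * z - 1)) + sumR (fun r => IZR ((Z.of_nat r * a) / b)) (Z.to_nat b)
  <= Fs theta z (Z.to_nat b) <=
  IZR (rfloor (IZR b * z + 1)) + sumR (fun r => IZR ((Z.of_nat r * a) / b)) (Z.to_nat b).
Proof.
  intros Hb Hg Happ.
  assert (Hb' : 0 < IZR b) by (apply IZR_lt; lia).
  assert (Hbe : forall r, (r < Z.to_nat b)%nat -> Rabs (INR r * theta - INR r * IZR a / IZR b) <= / IZR b).
  { intros r Hr. assert (Hr' : INR r <= IZR b - 1).
    { rewrite INR_IZR_INZ. assert (Z.of_nat r + 1 <= b)%Z by lia. apply IZR_le in H. rewrite plus_IZR in H. lra. }
    replace (INR r * theta - INR r * IZR a / IZR b) with (INR r / IZR b * (IZR b * theta - IZR a)) by (field; lra).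
    rewrite Rabs_mult. rewrite Rabs_right by (apply Rle_ge; apply Rmult_le_pos; [apply pos_INR| left; apply Rinv_0_lt_compat; lra]).
    apply Rle_trans with (INR r / IZR b * / IZR b). apply Rmult_le_compat_l; auto.
    apply Rmult_le_pos; [apply pos_INR| left; apply Rinv_0_lt_compat; lra].
    assert (INR r / IZR b <= 1).
    { apply Rmult_le_reg_r with (IZR b); auto. unfold Rdiv. rewrite Rmult_assoc, Rinv_l by lra. lra. }
    assert (0 < / IZR b) by (apply Rinv_0_lt_compat; lra). nra. }
  assert (Hb1 : IZR b * (z - / IZR b) = IZR b * z - 1) by (field; lra).
  assert (Hb2 : IZR b * (z + / IZR b) = IZR b * z + 1) by (field; lra).
  split.
  - rewrite <- Hb1, <- hermite_real by auto. unfold Fs. apply sumR_le. intros r Hr.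
    apply IZR_le, fl_mono. pose proof (Hbe r Hr). apply Rabs_le_inv2 in H. lra.
  - rewrite <- Hb2, <- hermite_real by auto. unfold Fs. apply sumR_le. intros r Hr.
    apply IZR_le, fl_mono. pose proof (Hbe r Hr). apply Rabs_le_inv2 in H. lra.
Qed.

Definition tm (theta L z : R) (j : nat) :=
  IZR (rfloor (z + INR j * theta)) - IZR (rfloor (z - L + INR j * theta)).

Lemma tm_01 theta L z j : 0 <= L <= 1 -> 0 <= tm theta L z j <= 1.
Proof.
  intros HL. unfold tm.
  pose proof (fl_spec (z + INR j * theta)).
  assert (rfloor (z - L + INR j * theta) <= rfloor (z + INR j * theta))%Z by (apply fl_mono; lra).
  assert (rfloor (z + INR j * theta) - 1 <= rfloor (z - L + INR j * theta))%Z.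
  { apply fl_le_of. rewrite minus_IZR. lra. }
  apply IZR_le in H0. apply IZR_le in H1. rewrite minus_IZR in H1. lra.
Qed.

Lemma block_count theta a b L z : (0 < b)%Z -> Z.gcd a b = 1%Z ->
  Rabs (IZR b * theta - IZR a) <= / IZR b -> 0 <= L <= 1 ->
  Rabs (sumR (tm theta L z) (Z.to_nat b) - IZR b * L) <= 3.
Proof.
  intros Hb Hg Happ HL.
  unfold tm. rewrite sumR_minus. fold (Fs theta z (Z.to_nat b)). fold (Fs theta (z - L) (Z.to_nat b)).
  destruct (block_F theta a b z Hb Hg Happ) as [A1 A2].
  destruct (block_F theta a b (z - L) Hb Hg Happ) as [B1 B2].
  pose proof (fl_spec (IZR b * z - 1)). pose proof (fl_spec (IZR b * z + 1)).
  pose proof (fl_spec (IZR b * (z - L) - 1)). pose proof (fl_spec (IZR b * (z - L) + 1)).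
  apply Rabs_le. nra.
Qed.

Lemma multi_block theta a b L : (0 < b)%Z -> Z.gcd a b = 1%Z ->
  Rabs (IZR b * theta - IZR a) <= / IZR b -> 0 <= L <= 1 ->
  forall h rem z, Rabs (sumR (tm theta L z) (h * Z.to_nat b + rem) - INR (h * Z.to_nat b + rem) * L)
     <= 3 * INR h + INR rem.
Proof.
  intros Hb Hg Happ HL. induction h; intros rem z.
  - simpl Nat.mul. simpl Nat.add.
    replace (3 * INR 0 + INR rem) with (sumR (fun _ => 1) rem) by (rewrite sumR_const; simpl; lra).
    rewrite <- sumR_const, <- sumR_minus.
    eapply Rle_trans. apply sumR_abs.
    apply sumR_le. intros i _. pose proof (tm_01 theta L z i HL). apply Rabs_le. lra.
  - replace (S h * Z.to_nat b + rem)%nat with (Z.to_nat b + (h * Z.to_nat b + rem))%nat by lia.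
    rewrite sumR_split, plus_INR.
    rewrite (sumR_ext (fun i => tm theta L z (Z.to_nat b + i)) (tm theta L (z + IZR b * theta))).
    2:{ intros i _. unfold tm. rewrite plus_INR, INR_IZR_INZ, Z2Nat.id by lia.
        f_equal; f_equal; f_equal; ring. }
    pose proof (IHh rem (z + IZR b * theta)).
    pose proof (block_count theta a b L z Hb Hg Happ HL).
    rewrite INR_IZR_INZ, Z2Nat.id by lia. rewrite S_INR.
    apply Rabs_le. apply Rabs_le_inv2 in H. apply Rabs_le_inv2 in H0.
    lra.
Qed.

Lemma any_block theta a b L : (0 < b)%Z -> Z.gcd a b = 1%Z ->
  Rabs (IZR b * theta - IZR a) <= / IZR b -> 0 <= L <= 1 ->
  forall M z, Rabs (sumR (tm theta L z) M - INR M * L) <= 3 * INR M / IZR b + IZR b.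
Proof.
  intros Hb Hg Happ HL M z.
  set (b' := Z.to_nat b).
  assert (Hb' : (0 < b')%nat) by lia.
  pose proof (Nat.div_mod M b' ltac:(lia)).
  pose proof (Nat.mod_upper_bound M b' ltac:(lia)).
  pose proof (multi_block theta a b L Hb Hg Happ HL (M / b') (M mod b') z).
  fold b' in H1. replace (M / b' * b' + M mod b')%nat with M in H1 by lia.
  eapply Rle_trans; [apply H1|].
  assert (IZR b = INR b') by (unfold b'; rewrite INR_IZR_INZ, Z2Nat.id by lia; auto).
  rewrite H2.
  assert (INR (M mod b') <= INR b') by (apply le_INR; lia).
  assert (0 < INR b') by (apply lt_0_INR; lia).
  assert (INR (M / b') * INR b' <= INR M).
  { rewrite <- mult_INR. apply le_INR. rewrite H at 2. lia. }
  assert (INR (M / b') <= INR M / INR b').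
  { apply Rmult_le_reg_r with (INR b'); auto. unfold Rdiv. rewrite Rmult_assoc, Rinv_l by lra. lra. }
  unfold Rdiv in *. lra.
Qed.

End P3.
Import P3.

Module P4.
Local Open Scope R_scope.

Lemma pigeon : forall B (f : nat -> nat), (forall j, (j <= B)%nat -> (f j < B)%nat) ->
  exists i j, (i < j <= B)%nat /\ f i = f j.
Proof.
  induction B; intros f H. specialize (H O ltac:(lia)). lia.
  destruct (classic (exists i, (i <= B)%nat /\ f i = f (S B))) as [[i [Hi E]]|Hn].
  - exists i, (S B). split; auto; lia.
  - set (g := fun j => if Nat.eqb (f j) B then f (S B) else f j).
    destruct (IHB g) as [i [j [Hij E]]].
    + intros j Hj. unfold g. pose proof (H j ltac:(lia)). pose proof (H (S B) ltac:(lia)).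
      destruct (Nat.eqb_spec (f j) B).
      * assert (f (S B) <> B) by (intro; apply Hn; exists j; split; auto; lia). lia.
      * lia.
    + unfold g in E. destruct (Nat.eqb_spec (f i) B), (Nat.eqb_spec (f j) B).
      * exists i, j; split; [lia|congruence].
      * exfalso. apply Hn. exists j. split; [lia|auto].
      * exfalso. apply Hn. exists i. split; [lia|auto].
      * exists i, j; split; [lia|auto].
Qed.

Definition frac (x : R) := x - IZR (rfloor x).

Lemma frac_range x : 0 <= frac x < 1.
Proof. unfold frac. pose proof (fl_spec x). lra. Qed.

Lemma dirichlet0 theta (B : nat) : (1 <= B)%nat ->
  exists b a, (1 <= b <= B)%nat /\ Rabs (INR b * theta - IZR a) < / INR B.
Proof.
  intros HB.
  assert (HB' : 0 < INR B) by (apply lt_0_INR; lia).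
  set (f := fun j => Z.to_nat (rfloor (INR B * frac (INR j * theta)))).
  destruct (pigeon B f) as [i [j [Hij E]]].
  - intros j Hj. unfold f. pose proof (frac_range (INR j * theta)).
    assert (0 <= rfloor (INR B * frac (INR j * theta)))%Z by (apply fl_le_of; simpl; nra).
    assert (rfloor (INR B * frac (INR j * theta)) < Z.of_nat B)%Z by (apply fl_lt_of; rewrite <- INR_IZR_INZ; nra).
    lia.
  - exists (j - i)%nat, (rfloor (INR j * theta) - rfloor (INR i * theta))%Z. split. lia.
    unfold f in E.
    pose proof (frac_range (INR j * theta)). pose proof (frac_range (INR i * theta)).
    assert (0 <= rfloor (INR B * frac (INR j * theta)))%Z by (apply fl_le_of; simpl; nra).
    assert (0 <= rfloor (INR B * frac (INR i * theta)))%Z by (apply fl_le_of; simpl; nra).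
    apply (f_equal Z.of_nat) in E. rewrite !Z2Nat.id in E by lia.
    pose proof (fl_spec (INR B * frac (INR j * theta))). pose proof (fl_spec (INR B * frac (INR i * theta))).
    apply (f_equal IZR) in E.
    assert (Hd : Rabs (INR B * frac (INR j * theta) - INR B * frac (INR i * theta)) < 1) by (apply Rabs_def1; lra).
    replace (INR (j - i) * theta - IZR (rfloor (INR j * theta) - rfloor (INR i * theta)))
      with (frac (INR j * theta) - frac (INR i * theta)).
    2:{ unfold frac. rewrite minus_INR by lia. rewrite minus_IZR. ring. }
    rewrite <- Rmult_minus_distr_l, Rabs_mult, Rabs_right in Hd by lra.
    apply Rmult_lt_reg_l with (INR B); auto. rewrite Rinv_r by lra. lra.
Qed.

Lemma dirichlet theta (B : nat) : (1 <= B)%nat ->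
  exists b a, (1 <= b <= B)%nat /\ Rabs (INR b * theta - IZR a) < / INR B /\ Z.gcd a (Z.of_nat b) = 1%Z.
Proof.
  intros HB.
  set (P := fun b => (1 <= b <= B)%nat /\ exists a, Rabs (INR b * theta - IZR a) < / INR B).
  destruct (dec_inh_nat_subset_has_unique_least_element P) as [b [[Pb Hmin] _]].
  - intros n; apply classic.
  - destruct (dirichlet0 theta B HB) as [b [a [H1 H2]]]. exists b; split; eauto.
  - destruct Pb as [Hb [a Ha]]. exists b, a. split; auto. split; auto.
    set (g := Z.gcd a (Z.of_nat b)).
    assert (Hg0 : (0 <= g)%Z) by apply Z.gcd_nonneg.
    assert (Hgb : (g | Z.of_nat b)%Z) by apply Z.gcd_divide_r.
    assert (Hga : (g | a)%Z) by apply Z.gcd_divide_l.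
    destruct Hgb as [b' Hb']. destruct Hga as [a' Ha'].
    destruct (Z.eq_dec g 1) as [E|E]; auto. exfalso.
    assert (g <> 0)%Z by (intro; rewrite H in Hb'; lia).
    assert (1 < g)%Z by lia.
    assert (0 < b')%Z by nia.
    assert (b' < Z.of_nat b)%Z by nia.
    assert (P (Z.to_nat b')).
    { split. lia. exists a'.
      assert (INR b * theta - IZR a = IZR g * (INR (Z.to_nat b') * theta - IZR a')).
      { rewrite INR_IZR_INZ. rewrite Hb', Ha', !mult_IZR. rewrite INR_IZR_INZ, Z2Nat.id by lia. ring. }
      rewrite H3, Rabs_mult in Ha. rewrite (Rabs_right (IZR g)) in Ha by (apply Rle_ge, IZR_le; lia).
      assert (1 < IZR g) by (apply IZR_lt; lia).
      pose proof (Rabs_pos (INR (Z.to_nat b') * theta - IZR a')). nra. }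
    specialize (Hmin _ H3). lia.
Qed.

End P4.
Import P4.

Module P5.
Local Open Scope R_scope.

Lemma dist_le x a : dist_nint x <= Rabs (x - IZR a).
Proof.
  unfold dist_nint. pose proof (fl_spec x).
  destruct (Z_le_gt_dec a (rfloor x)).
  - apply IZR_le in l. eapply Rle_trans. apply Rmin_l. rewrite Rabs_right; lra.
  - assert (rfloor x + 1 <= a)%Z by lia. apply IZR_le in H0. rewrite plus_IZR in H0.
    eapply Rle_trans. apply Rmin_r. rewrite Rabs_left1; lra.
Qed.

Lemma dist_pos alpha n : irrational alpha -> (1 <= n)%nat -> 0 < dist_nint (alpha * INR n).
Proof.
  intros Hirr Hn. unfold dist_nint. pose proof (fl_spec (alpha * INR n)).
  apply Rmin_glb_lt; [|lra].
  destruct H. destruct H; [lra|]. exfalso.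
  apply (Hirr (rfloor (alpha * INR n)) (Z.of_nat n)). lia.
  rewrite H. rewrite <- INR_IZR_INZ. field. apply not_0_INR. lia.
Qed.

Lemma min_dist alpha : irrational alpha -> forall M, exists m0, 0 < m0 /\
  forall n, (1 <= n < M)%nat -> m0 <= dist_nint (alpha * INR n).
Proof.
  intros Hirr M. induction M.
  - exists 1. split. lra. intros; lia.
  - destruct IHM as [m0 [Hm0 H]].
    destruct (Nat.eq_dec M 0) as [->|HM].
    + exists 1; split; [lra|intros; lia].
    + exists (Rmin m0 (dist_nint (alpha * INR M))). split.
      apply Rmin_glb_lt; auto. apply dist_pos; auto; lia.
      intros n Hn. destruct (Nat.eq_dec n M) as [->|Hne]. apply Rmin_r.
      eapply Rle_trans. apply Rmin_l. apply H. lia.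
Qed.

Lemma dioph alpha : irrational alpha -> finite_type alpha ->
  exists c0 (T : nat), 0 < c0 /\ (1 <= T)%nat /\
    forall n : nat, (1 <= n)%nat -> c0 / INR n ^ T <= dist_nint (alpha * INR n).
Proof.
  intros Hirr [T0 HT0].
  assert (Hnl : ~ liminf_zero alpha (T0 + 1)) by (intro H; apply HT0 in H; lra).
  unfold liminf_zero in Hnl.
  apply not_all_ex_not in Hnl. destruct Hnl as [eps Hnl].
  apply imply_to_and in Hnl. destruct Hnl as [Heps Hnl].
  apply not_all_ex_not in Hnl. destruct Hnl as [M Hnl].
  assert (HM : forall n, (M <= n)%nat -> (1 <= n)%nat -> eps <= Rpower (INR n) (T0 + 1) * dist_nint (alpha * INR n)).
  { intros n H1 H2. apply Rnot_lt_le. intro H3. apply Hnl. exists n. auto. }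
  destruct (min_dist alpha Hirr M) as [m0 [Hm0 Hmin]].
  set (T := Nat.max 1 (Z.to_nat (up (T0 + 1)))).
  assert (HT : T0 + 1 <= INR T).
  { destruct (archimed (T0 + 1)). unfold T.
    destruct (Z_le_gt_dec (up (T0 + 1)) 0).
    - assert (IZR (up (T0+1)) <= 0) by (apply IZR_le; lia). pose proof (le_INR 1 (Nat.max 1 (Z.to_nat (up (T0 + 1)))) (Nat.le_max_l _ _)). change (INR 1) with 1 in H2. lra.
    - pose proof (le_INR (Z.to_nat (up (T0 + 1))) (Nat.max 1 (Z.to_nat (up (T0 + 1)))) (Nat.le_max_r _ _)).
      rewrite INR_IZR_INZ, Z2Nat.id in H1 by lia. lra. }
  exists (Rmin eps m0), T. split. apply Rmin_glb_lt; auto. split. unfold T; lia.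
  intros n Hn.
  assert (Hn' : 1 <= INR n) by (apply (le_INR 1); lia).
  assert (Hp : 1 <= INR n ^ T) by (apply pow_R1_Rle; lra).
  assert (Hd : 0 < dist_nint (alpha * INR n)) by (apply dist_pos; auto).
  destruct (le_lt_dec M n).
  - specialize (HM n l Hn).
    assert (Rpower (INR n) (T0 + 1) <= INR n ^ T).
    { rewrite <- Rpower_pow by lra. apply Rle_Rpower; lra. }
    apply Rle_trans with (eps / INR n ^ T).
    + unfold Rdiv. apply Rmult_le_compat_r. left; apply Rinv_0_lt_compat; lra. apply Rmin_l.
    + apply Rmult_le_reg_r with (INR n ^ T). lra. unfold Rdiv. rewrite Rmult_assoc, Rinv_l by lra.
      assert (0 < Rpower (INR n) (T0 + 1)) by (unfold Rpower; apply exp_pos). nra.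
  - specialize (Hmin n ltac:(lia)).
    apply Rle_trans with (Rmin eps m0). 
    + unfold Rdiv. pose proof (Rmin_r eps m0).
      assert (0 < Rmin eps m0) by (apply Rmin_glb_lt; auto).
      assert (/ INR n ^ T <= 1). { rewrite <- Rinv_1. apply Rinv_le_contravar; lra. }
      assert (0 < / INR n ^ T) by (apply Rinv_0_lt_compat; lra). nra.
    + eapply Rle_trans. apply Rmin_r. auto.
Qed.

End P5.
Import P5.

Module P6.
Local Open Scope R_scope.

Lemma pow_lt_base x y (T : nat) : 0 <= x -> x <= y -> x ^ T <= y ^ T.
Proof. intros. apply pow_incr; lra. Qed.

Lemma disc_q alpha c0 (T : nat) (q Y Bq : nat) :
  0 < c0 -> (1 <= q)%nat -> (1 <= Y)%nat -> (1 <= Bq)%nat ->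
  (forall n : nat, (1 <= n)%nat -> c0 / INR n ^ T <= dist_nint (alpha * INR n)) ->
  INR q * INR Y ^ T / c0 <= INR Bq ->
  forall M z, Rabs (sumR (tm (alpha / INR q) (/ INR q) z) M - INR M / INR q) <= 3 * INR M / INR Y + INR Bq.
Proof.
  intros Hc0 Hq HY HB Hd HBq M z.
  assert (Hq' : 1 <= INR q) by (apply (le_INR 1); lia).
  assert (HY' : 1 <= INR Y) by (apply (le_INR 1); lia).
  assert (HB' : 1 <= INR Bq) by (apply (le_INR 1); lia).
  destruct (dirichlet (alpha / INR q) Bq HB) as [b [a [Hb [Happ Hg]]]].
  assert (Hb1 : 1 <= INR b) by (apply (le_INR 1); lia).
  assert (HbB : INR b <= INR Bq) by (apply le_INR; lia).
  assert (HbY : INR Y <= INR b).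
  { pose proof (Hd b ltac:(lia)).
    pose proof (dist_le (alpha * INR b) (Z.of_nat q * a)).
    assert (Rabs (alpha * INR b - IZR (Z.of_nat q * a)) = INR q * Rabs (INR b * (alpha / INR q) - IZR a)).
    { rewrite <- (Rabs_right (INR q)) at 1 by lra. rewrite <- Rabs_mult. f_equal.
      rewrite mult_IZR, <- INR_IZR_INZ. field. lra. }
    rewrite H1 in H0.
    assert (INR q * Rabs (INR b * (alpha / INR q) - IZR a) < INR q / INR Bq).
    { unfold Rdiv. apply Rmult_lt_compat_l; lra. }
    assert (INR q / INR Bq <= c0 / INR Y ^ T).
    { assert (0 < INR Y ^ T) by (apply pow_lt; lra).
      unfold Rdiv. apply Rmult_le_reg_r with (INR Bq * INR Y ^ T). nra.
      replace (INR q * / INR Bq * (INR Bq * INR Y ^ T)) with (INR q * INR Y ^ T) by (field; lra).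
      replace (c0 * / INR Y ^ T * (INR Bq * INR Y ^ T)) with (c0 * INR Bq) by (field; lra).
      unfold Rdiv in HBq. apply Rmult_le_compat_r with (r := c0) in HBq; [|lra].
      rewrite Rmult_assoc, Rinv_l in HBq by lra. lra. }
    destruct (Rle_lt_dec (INR Y) (INR b)) as [|Hlt]; auto. exfalso.
    assert (INR b ^ T <= INR Y ^ T) by (apply pow_lt_base; lra).
    assert (0 < INR b ^ T) by (apply pow_lt; lra).
    assert (c0 / INR Y ^ T <= c0 / INR b ^ T).
    { unfold Rdiv. apply Rmult_le_compat_l. lra. apply Rinv_le_contravar; lra. }
    lra. }
  assert (Hb0 : (0 < Z.of_nat b)%Z) by lia.
  assert (Hg' : Z.gcd a (Z.of_nat b) = 1%Z) by auto.
  assert (Happ' : Rabs (IZR (Z.of_nat b) * (alpha / INR q) - IZR a) <= / IZR (Z.of_nat b)).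
  { rewrite <- INR_IZR_INZ. left. eapply Rlt_le_trans. apply Happ. apply Rinv_le_contravar; lra. }
  assert (HL : 0 <= / INR q <= 1).
  { split. left; apply Rinv_0_lt_compat; lra. rewrite <- Rinv_1. apply Rinv_le_contravar; lra. }
  pose proof (any_block (alpha / INR q) a (Z.of_nat b) (/ INR q) Hb0 Hg' Happ' HL M z).
  rewrite <- INR_IZR_INZ in H. unfold Rdiv at 1 in H.
  eapply Rle_trans. unfold Rdiv at 2. apply H.
  apply Rplus_le_compat; auto.
  unfold Rdiv. apply Rmult_le_compat_l. pose proof (pos_INR M); lra.
  apply Rinv_le_contravar; lra.
Qed.

Definition dvdI (q : nat) (F : Z) : R := if Z.eqb (F mod Z.of_nat q) 0 then 1 else 0.

Lemma tm_dvd alpha beta (q : nat) (m1 : Z) j : (1 <= q)%nat ->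
  tm (alpha / INR q) (/ INR q) ((alpha * IZR m1 + beta) / INR q) j =
  dvdI q (rfloor (alpha * IZR (m1 + Z.of_nat j) + beta)).
Proof.
  intros Hq. unfold tm, dvdI.
  assert (Hq' : 0 < INR q) by (apply lt_0_INR; lia).
  set (x := alpha * IZR (m1 + Z.of_nat j) + beta).
  replace ((alpha * IZR m1 + beta) / INR q + INR j * (alpha / INR q)) with (x / IZR (Z.of_nat q)).
  2:{ unfold x. rewrite <- INR_IZR_INZ, plus_IZR, <- INR_IZR_INZ. field. lra. }
  replace ((alpha * IZR m1 + beta) / INR q - / INR q + INR j * (alpha / INR q)) with ((x + IZR (-1)) / IZR (Z.of_nat q)).
  2:{ unfold x. rewrite <- INR_IZR_INZ, plus_IZR, <- INR_IZR_INZ. field. lra. }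
  rewrite !fl_div by lia. rewrite fl_addZ.
  pose proof (div_succ_diff (rfloor x + -1) (Z.of_nat q) ltac:(lia)).
  replace (rfloor x + -1 + 1)%Z with (rfloor x) in H by ring.
  destruct (Z.eqb _ 0); apply (f_equal IZR) in H; rewrite minus_IZR in H; simpl in H; lra.
Qed.

End P6.
Import P6.

Module P7.
Local Open Scope R_scope.

Lemma fold_sumR (f : nat -> nat) s n :
  INR (fold_right Nat.add 0%nat (map f (seq s n))) = sumR (fun i => INR (f (s + i)%nat)) n.
Proof.
  revert s. induction n; intros s. simpl; auto.
  simpl seq. simpl map. simpl fold_right. rewrite plus_INR, IHn, sumR_shift.
  rewrite Nat.add_0_r. f_equal. apply sumR_ext. intros. f_equal. f_equal. lia.
Qed.

Definition cl (x : R) : Z := (- rfloor (- x))%Z.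
Lemma cl_spec x : x <= IZR (cl x) < x + 1.
Proof. unfold cl. rewrite opp_IZR. pose proof (fl_spec (- x)). lra. Qed.
Lemma cl_le x z : x <= IZR z -> (cl x <= z)%Z.
Proof. intros. unfold cl. assert (- z <= rfloor (- x))%Z by (apply fl_le_of; rewrite opp_IZR; lra). lia. Qed.
Lemma cl_ge x z : IZR z < x + 1 -> x <= IZR z -> cl x = z.
Proof. intros. unfold cl. assert (rfloor (-x) = - z)%Z by (apply fl_unique; rewrite opp_IZR; lra). lia. Qed.

Section B.
Variable alpha beta : R.
Hypothesis Ha : alpha > 1.

Definition fb (m : Z) : Z := rfloor (alpha * IZR m + beta).
Definition gb (N : nat) : Z := cl ((INR N + 1 - beta) / alpha).

Lemma gb_spec N : INR N + 1 <= alpha * IZR (gb N) + beta < INR N + 1 + alpha.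
Proof.
  unfold gb. pose proof (cl_spec ((INR N + 1 - beta) / alpha)).
  set (c := IZR (cl ((INR N + 1 - beta) / alpha))) in *.
  assert ((INR N + 1 - beta) / alpha * alpha = INR N + 1 - beta) by (field; lra).
  split; nra.
Qed.

Lemma gb_step N : (gb (S N) = gb N \/ gb (S N) = gb N + 1)%Z.
Proof.
  pose proof (gb_spec N). pose proof (gb_spec (S N)). rewrite S_INR in H0.
  assert (gb N <= gb (S N))%Z.
  { destruct (Z_le_gt_dec (gb N) (gb (S N))); auto. assert (gb (S N) + 1 <= gb N)%Z by lia.
    apply IZR_le in H1. rewrite plus_IZR in H1. nra. }
  assert (gb (S N) <= gb N + 1)%Z.
  { destruct (Z_le_gt_dec (gb (S N)) (gb N + 1)); auto. assert (gb N + 2 <= gb (S N))%Z by lia.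
    apply IZR_le in H2. rewrite plus_IZR in H2. nra. }
  lia.
Qed.

Lemma gb_mono N : (gb 0 <= gb N)%Z.
Proof. induction N. lia. destruct (gb_step N); lia. Qed.

Lemma fb_eq m n : fb m = n <-> IZR n <= alpha * IZR m + beta < IZR n + 1.
Proof. split. intros <-. apply fl_spec. apply fl_unique. Qed.

Lemma gb_inc N : gb (S N) = (gb N + 1)%Z <-> fb (gb N) = Z.of_nat (S N).
Proof.
  pose proof (gb_spec N). pose proof (gb_spec (S N)). rewrite S_INR in H0.
  rewrite fb_eq. rewrite <- INR_IZR_INZ, S_INR. split.
  - intros E. rewrite E, plus_IZR in H0. split; lra.
  - intros [_ H1]. destruct (gb_step N) as [E|E]; auto. rewrite E in H0. lra.
Qed.

Lemma beatty_iff N : in_beatty alpha beta (Z.of_nat (S N)) <-> fb (gb N) = Z.of_nat (S N).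
Proof.
  split.
  - intros [_ [m Hm]]. symmetry in Hm. fold (fb m) in Hm.
    pose proof (gb_spec N). apply fb_eq in Hm. rewrite <- INR_IZR_INZ, S_INR in Hm.
    assert (m = gb N).
    { destruct (Z.lt_trichotomy m (gb N)) as [L|[E|L]]; auto.
      - assert (m + 1 <= gb N)%Z by lia. apply IZR_le in H0. rewrite plus_IZR in H0. nra.
      - assert (gb N + 1 <= m)%Z by lia. apply IZR_le in H0. rewrite plus_IZR in H0. nra. }
    subst. apply fb_eq. rewrite <- INR_IZR_INZ, S_INR. auto.
  - intros E. split. lia. exists (gb N). rewrite <- E. auto.
Qed.

Lemma count_reindex (P : Z -> Prop) N :
  INR (fold_right Nat.add 0%nat (map (fun n : nat => indic (in_beatty alpha beta (Z.of_nat n) /\ P (Z.of_nat n))) (seq 1 N)))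
  = sumR (fun j => INR (indic (P (fb (gb 0 + Z.of_nat j)%Z)))) (Z.to_nat (gb N - gb 0)).
Proof.
  rewrite fold_sumR. induction N.
  - simpl. replace (gb 0 - gb 0)%Z with 0%Z by lia. auto.
  - rewrite sumR_S. rewrite IHN.
    pose proof (gb_mono N).
    destruct (gb_step N) as [E|E].
    + rewrite E. replace (indic _) with 0%nat. simpl; lra.
      unfold indic. destruct (excluded_middle_informative _) as [[Hb _]|]; auto.
      replace (Z.of_nat (1 + N)) with (Z.of_nat (S N)) in Hb by (f_equal; lia).
      apply beatty_iff in Hb. apply gb_inc in Hb. lia.
    + rewrite E. replace (Z.to_nat (gb N + 1 - gb 0)) with (S (Z.to_nat (gb N - gb 0))) by lia.
      rewrite sumR_S. f_equal. f_equal.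
      replace (gb 0 + Z.of_nat (Z.to_nat (gb N - gb 0)))%Z with (gb N) by lia.
      pose proof E as E'. apply gb_inc in E'. rewrite E'.
      replace (Z.of_nat (1 + N)) with (Z.of_nat (S N)) by (f_equal; lia).
      unfold indic. destruct (excluded_middle_informative _) as [[_ H1]|H1];
      destruct (excluded_middle_informative _) as [H2|H2]; auto.
      * exfalso; auto.
      * exfalso. apply H1. split; auto. apply beatty_iff. auto.
Qed.

Lemma M_bound N : Rabs (IZR (gb N - gb 0) - INR N / alpha) <= 1.
Proof.
  pose proof (gb_spec N). pose proof (gb_spec 0). simpl INR in H0.
  rewrite minus_IZR. apply Rabs_le.
  assert (INR N / alpha * alpha = INR N) by (field; lra).
  split; nra.
Qed.

Lemma fb_range N j : (j < Z.to_nat (gb N - gb 0))%nat -> (1 <= fb (gb 0 + Z.of_nat j) <= Z.of_nat N)%Z.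
Proof.
  intros Hj. pose proof (gb_spec N). pose proof (gb_spec 0). simpl INR in H0.
  set (m := (gb 0 + Z.of_nat j)%Z).
  assert (gb 0 <= m <= gb N - 1)%Z by (unfold m; lia).
  assert (IZR (gb 0) <= IZR m) by (apply IZR_le; lia).
  assert (IZR m <= IZR (gb N) - 1) by (rewrite <- minus_IZR; apply IZR_le; lia).
  unfold fb. split.
  - apply fl_le_of. nra.
  - assert (rfloor (alpha * IZR m + beta) < Z.of_nat N + 1)%Z.
    { apply fl_lt_of. rewrite plus_IZR, <- INR_IZR_INZ. nra. }
    lia.
Qed.

Lemma fb_incr m : (fb m + 1 <= fb (m + 1))%Z.
Proof.
  unfold fb. apply fl_le_of. rewrite plus_IZR, plus_IZR. pose proof (fl_spec (alpha * IZR m + beta)). nra.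
Qed.
End B.

End P7.
Import P7.

Module P8.
Local Open Scope Z_scope.

Fixpoint srch (fuel : nat) (e d : Z) : Z :=
  match fuel with O => d | S f => if Z.eqb (d mod e) 0 then e else srch f (e + 1) d end.

Lemma srch_spec d : forall fuel e, 2 <= e <= d -> d < e + Z.of_nat fuel ->
  e <= srch fuel e d <= d /\ d mod (srch fuel e d) = 0 /\
  forall e', e <= e' < srch fuel e d -> d mod e' <> 0.
Proof.
  induction fuel; intros e He Hf. simpl in Hf. lia.
  simpl. destruct (Z.eqb_spec (d mod e) 0).
  - split. lia. split. auto. intros; lia.
  - assert (e <> d) by (intro; subst; rewrite Z.mod_same in n; lia).
    destruct (IHfuel (e + 1)) as [A [B C]]. lia. lia.
    split. lia. split. auto. intros e' He'. destruct (Z.eq_dec e' e). subst; auto. apply C; lia.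
Qed.

Definition spf (d : Z) := srch (Z.to_nat d) 2 d.

Lemma spf_spec d : 2 <= d -> 2 <= spf d <= d /\ (spf d | d) /\ forall e, 2 <= e < spf d -> ~ (e | d).
Proof.
  intros Hd. destruct (srch_spec d (Z.to_nat d) 2) as [A [B C]]; try lia.
  fold (spf d) in *. split; auto. split. apply Z.mod_divide; auto; lia.
  intros e He Hdiv. apply (C e He). apply Z.mod_divide; auto; lia.
Qed.

Lemma spf_prime d : 2 <= d -> prime (spf d).
Proof.
  intros Hd. destruct (spf_spec d Hd) as [A [B C]].
  apply prime_intro. lia. intros n Hn. apply Zgcd_1_rel_prime.
  set (g := Z.gcd n (spf d)).
  assert (g | n) by apply Z.gcd_divide_l. assert (g | spf d) by apply Z.gcd_divide_r.
  assert (0 <= g) by apply Z.gcd_nonneg.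
  assert (g <> 0) by (intro E; rewrite E in H; destruct H; lia).
  assert (g <= n) by (apply Z.divide_pos_le; auto; lia).
  destruct (Z.eq_dec g 1); auto. exfalso. apply (C g). lia. eapply Z.divide_trans; eauto.
Qed.

Lemma spf_char d e : 2 <= e -> (e | d) -> 2 <= d -> (forall e', 2 <= e' < e -> ~ (e' | d)) -> spf d = e.
Proof.
  intros He Hed Hd Hmin. destruct (spf_spec d Hd) as [A [B C]].
  assert (e <= d) by (apply Z.divide_pos_le; auto; lia).
  destruct (Z.lt_trichotomy (spf d) e) as [L|[E|L]]; auto.
  - exfalso. apply (Hmin (spf d)); auto; lia.
  - exfalso. apply (C e); auto; lia.
Qed.

Fixpoint mu_f (fuel : nat) (d : Z) : Z :=
  match fuel with
  | O => 1
  | S f => if Z.leb d 1 then 1 else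
      let s := spf d in if Z.eqb ((d / s) mod s) 0 then 0 else - mu_f f (d / s)
  end.

Definition mu (d : Z) := mu_f (Z.to_nat d) d.

Lemma spf_div d : 2 <= d -> 1 <= d / spf d < d.
Proof.
  intros Hd. destruct (spf_spec d Hd) as [A [[c Hc] C]].
  set (s := spf d) in *. assert (d / s = c) by (rewrite Hc, Z.div_mul; lia). nia.
Qed.

Lemma mu_fuel : forall n f1 f2 d, 1 <= d <= Z.of_nat n -> (Z.to_nat d <= f1)%nat -> (Z.to_nat d <= f2)%nat ->
  mu_f f1 d = mu_f f2 d.
Proof.
  induction n; intros f1 f2 d Hd H1 H2. lia.
  destruct f1 as [|f1]. lia. destruct f2 as [|f2]. lia.
  simpl. destruct (Z.leb_spec d 1); auto.
  pose proof (spf_div d ltac:(lia)).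
  destruct (Z.eqb _ 0); auto. f_equal. apply IHn; lia.
Qed.

Lemma mu_unfold d : 2 <= d ->
  mu d = if Z.eqb ((d / spf d) mod spf d) 0 then 0 else - mu (d / spf d).
Proof.
  intros Hd. unfold mu at 1. destruct (Z.to_nat d) eqn:E. lia.
  simpl. destruct (Z.leb_spec d 1). lia.
  pose proof (spf_div d Hd).
  destruct (Z.eqb _ 0); auto. f_equal. unfold mu. apply (mu_fuel (Z.to_nat d)); lia.
Qed.

Lemma mu_1 : mu 1 = 1.
Proof. reflexivity. Qed.

Lemma mu_abs_f : forall f d, -1 <= mu_f f d <= 1.
Proof. induction f; intros d; simpl. lia. destruct (Z.leb d 1). lia. destruct (Z.eqb _ 0). lia. specialize (IHf (d / spf d)). lia. Qed.

Lemma mu_abs d : -1 <= mu d <= 1.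
Proof. apply mu_abs_f. Qed.

Lemma prime_div_prime s p : prime s -> prime p -> (s | p) -> s = p.
Proof.
  intros Hs Hp H. apply prime_divisors in H; auto. pose proof (prime_ge_2 s Hs). pose proof (prime_ge_2 p Hp). lia.
Qed.

Lemma spf_of_factor p d : 2 <= p -> 2 <= d -> (spf (p * d) | d) -> spf d = spf (p * d).
Proof.
  intros Hp Hd Hs. destruct (spf_spec (p * d) ltac:(nia)) as [A [B C]].
  apply spf_char; auto. lia.
  intros e' He' Hdiv. apply (C e' He'). apply Z.divide_mul_r. auto.
Qed.

Lemma mu_props p : prime p -> forall n d, 1 <= d <= Z.of_nat n ->
  (~ (p | d) -> mu (p * d) = - mu d) /\ mu (p * p * d) = 0.
Proof.
  intros Hp. pose proof (prime_ge_2 p Hp) as Hp2.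
  induction n; intros d Hd. lia.
  split.
  - intros Hnd. set (m := p * d). assert (Hm : 2 <= m) by (unfold m; nia).
    pose proof (spf_prime m Hm) as Hs. destruct (spf_spec m Hm) as [A [B C]].
    rewrite (mu_unfold m Hm).
    destruct (prime_mult _ Hs p d B) as [Hsp|Hsd].
    + apply prime_div_prime in Hsp; auto. rewrite Hsp. unfold m.
      rewrite Z.mul_comm, Z.div_mul by lia.
      destruct (Z.eqb_spec (d mod p) 0); auto.
      exfalso. apply Hnd. apply Z.mod_divide; auto; lia.
    + assert (Hsnp : spf m <> p) by (intro E; rewrite E in Hsd; auto).
      assert (Hd2 : 2 <= d).
      { destruct (Z.eq_dec d 1); [|lia]. subst. apply Z.divide_pos_le in Hsd; lia. }
      destruct Hsd as [d' Hd'].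
      assert (E1 : spf d = spf m) by (apply spf_of_factor; auto; exists d'; auto).
      rewrite (mu_unfold d Hd2), E1.
      set (s := spf m) in *.
      assert (Em : m / s = p * d') by (unfold m; rewrite Hd', Z.mul_assoc, Z.div_mul; lia).
      assert (Ed : d / s = d') by (rewrite Hd', Z.div_mul; lia).
      rewrite Em, Ed.
      assert (Hd'r : 1 <= d' <= Z.of_nat n) by nia.
      assert (~ (p | d')) by (intro Hc; apply Hnd; rewrite Hd'; apply Z.divide_mul_l; auto).
      destruct (IHn d' Hd'r) as [IH1 _]. rewrite (IH1 H).
      assert (Hsp : ~ (s | p)) by (intro Hc; apply Hsnp; apply prime_div_prime; auto).
      destruct (Z.eqb_spec ((p * d') mod s) 0) as [E|E]; destruct (Z.eqb_spec (d' mod s) 0) as [E'|E']; try lia.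
      * exfalso. apply Z.mod_divide in E; [|lia]. apply prime_mult in E; auto. destruct E as [E|E]; auto.
        apply E'. apply Z.mod_divide; auto; lia.
      * exfalso. apply E. apply Z.mod_divide; [lia|]. apply Z.divide_mul_r. apply Z.mod_divide; auto; lia.
  - set (m := p * p * d). assert (Hm : 2 <= m) by (unfold m; nia).
    pose proof (spf_prime m Hm) as Hs. destruct (spf_spec m Hm) as [A [B C]].
    rewrite (mu_unfold m Hm).
    assert (B' : (spf m | p * (p * d))) by (replace (p * (p * d)) with m by (unfold m; ring); auto).
    clear B. rename B' into B.
    destruct (prime_mult _ Hs p (p * d) B) as [Hsp|Hsd].
    + apply prime_div_prime in Hsp; auto. rewrite Hsp. unfold m.
      rewrite <- Z.mul_assoc, (Z.mul_comm p (p * d)), Z.div_mul by lia.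
      rewrite Z.mul_comm, Z_mod_mult. auto.
    + destruct (prime_mult _ Hs p d Hsd) as [Hsp|Hsd'].
      * apply prime_div_prime in Hsp; auto. rewrite Hsp. unfold m.
        rewrite <- Z.mul_assoc, (Z.mul_comm p (p * d)), Z.div_mul by lia.
        rewrite Z.mul_comm, Z_mod_mult. auto.
      * destruct (Z.eqb _ 0); auto.
        destruct Hsd' as [d' Hd'].
        assert (Hd'r : 1 <= d' <= Z.of_nat n).
        { pose proof (prime_ge_2 _ Hs). assert (d <> d') by nia. nia. }
        destruct (IHn d' Hd'r) as [_ IH2].
        pose proof (prime_ge_2 _ Hs). set (s := spf m) in *.
        assert (Em : m = (p * p * d') * s) by (unfold m; rewrite Hd'; ring).
        replace (m / s) with (p * p * d'). rewrite IH2. auto.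
        rewrite Em, Z.div_mul; lia.
Qed.

End P8.
Import P8.

Module P9.
Local Open Scope R_scope.

Definition S1 (G : Z -> R) (X : nat) := sumR (fun i => G (Z.of_nat (S i))) X.

Lemma S1_S G X : S1 G (S X) = S1 G X + G (Z.of_nat (S X)).
Proof. reflexivity. Qed.

Lemma S1_ext G H X : (forall d, (1 <= d <= Z.of_nat X)%Z -> G d = H d) -> S1 G X = S1 H X.
Proof. intros E. unfold S1. apply sumR_ext. intros i Hi. apply E. lia. Qed.

Lemma S1_plus G H X : S1 (fun d => G d + H d) X = S1 G X + S1 H X.
Proof. unfold S1. apply sumR_plus. Qed.

Lemma S1_opp G X : S1 (fun d => - G d) X = - S1 G X.
Proof. unfold S1. replace (- sumR (fun i => G (Z.of_nat (S i))) X) with ((-1) * sumR (fun i => G (Z.of_nat (S i))) X) by ring.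
  rewrite <- sumR_scal. apply sumR_ext. intros; lra. Qed.

Lemma S1_zero G X : (forall d, (1 <= d <= Z.of_nat X)%Z -> G d = 0) -> S1 G X = 0.
Proof. intros. rewrite (S1_ext G (fun _ => 0)) by auto. unfold S1. rewrite sumR_const. lra. Qed.

Definition Pd (p : nat) (d : Z) : bool := Z.eqb (d mod Z.of_nat p) 0.

Lemma multiples (p : nat) (H : Z -> R) X : (1 <= p)%nat ->
  S1 (fun d => if Pd p d then H d else 0) X = S1 (fun e => H (Z.of_nat p * e)%Z) (X / p).
Proof.
  intros Hp. induction X.
  - rewrite Nat.div_0_l by lia. reflexivity.
  - rewrite S1_S, IHX. unfold Pd.
    rewrite <- Nat2Z.inj_mod.
    pose proof (Nat.div_mod X p ltac:(lia)). pose proof (Nat.mod_upper_bound X p ltac:(lia)).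
    pose proof (Nat.div_mod (S X) p ltac:(lia)). pose proof (Nat.mod_upper_bound (S X) p ltac:(lia)).
    destruct (Z.eqb_spec (Z.of_nat (S X mod p)) 0) as [E|E].
    + assert (S X mod p = 0)%nat by lia.
      assert (S X / p = S (X / p))%nat by nia.
      rewrite H5, S1_S. f_equal. f_equal. rewrite <- Nat2Z.inj_mul. f_equal. lia.
    + assert (S X / p = X / p)%nat by nia. rewrite H4. lra.
Qed.

Lemma pair_zero (p : nat) (G : Z -> R) X : (2 <= p)%nat ->
  (forall d, (1 <= d)%Z -> Pd p d = false -> G (Z.of_nat p * d)%Z = - G d) ->
  (forall d, (1 <= d)%Z -> G (Z.of_nat p * Z.of_nat p * d)%Z = 0) ->
  (forall d, (Z.of_nat X < d)%Z -> G d = 0) ->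
  S1 G X = 0.
Proof.
  intros Hp Hi Hii Hiii.
  set (G1 := fun d => if Pd p d then 0 else G d).
  set (G2 := fun d => if Pd p d then G d else 0).
  assert (E0 : S1 G X = S1 G1 X + S1 G2 X).
  { rewrite <- S1_plus. apply S1_ext. intros d _. unfold G1, G2. destruct (Pd p d); lra. }
  set (Y := (X / p)%nat).
  assert (E2 : S1 G2 X = - S1 G1 Y).
  { unfold G2. rewrite multiples by lia. fold Y.
    rewrite (S1_ext _ (fun e => (if Pd p e then 0 else G (Z.of_nat p * e)%Z) + (if Pd p e then G (Z.of_nat p * e)%Z else 0))).
    2:{ intros d _. destruct (Pd p d); lra. }
    rewrite S1_plus, multiples by lia.
    rewrite (S1_zero (fun e => G (Z.of_nat p * (Z.of_nat p * e))%Z)).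
    2:{ intros d Hd. rewrite Z.mul_assoc. apply Hii. lia. }
    rewrite <- S1_opp. rewrite Rplus_0_r. apply S1_ext. intros d Hd. unfold G1.
    destruct (Pd p d) eqn:E. lra. apply Hi; auto. lia. }
  assert (E1 : S1 G1 X = S1 G1 Y).
  { assert (HY : (Y <= X)%nat) by (unfold Y; apply Nat.div_le_upper_bound; nia).
    replace X with (Y + (X - Y))%nat at 1 by lia. unfold S1. rewrite sumR_split.
    rewrite (sumR_ext (fun i => G1 (Z.of_nat (S (Y + i)))) (fun _ => 0)).
    rewrite sumR_const. lra.
    intros i Hi'. unfold G1. destruct (Pd p _) eqn:E. auto.
    rewrite <- (Ropp_involutive (G _)). rewrite <- Hi by (auto; lia).
    rewrite Hiii. lra.
    pose proof (Nat.div_mod X p ltac:(lia)). pose proof (Nat.mod_upper_bound X p ltac:(lia)).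
    fold Y in H. nia. }
  rewrite E0, E1, E2. lra.
Qed.

End P9.
Import P9.

Module P10.
Local Open Scope Z_scope.

Lemma pow_ge1 d k : 1 <= d -> 1 <= d ^ Z.of_nat k.
Proof. intros. pose proof (Z.pow_le_mono_l 1 d (Z.of_nat k)). rewrite Z.pow_1_l in H0 by lia. lia. Qed.

Lemma pow_ge_base d k : 1 <= d -> (1 <= k)%nat -> d <= d ^ Z.of_nat k.
Proof. intros. rewrite <- (Z.pow_1_r d) at 1. apply Z.pow_le_mono_r; lia. Qed.

Lemma prime_div_pow p d k : prime p -> (p | d ^ Z.of_nat k) -> (1 <= k)%nat -> (p | d).
Proof.
  intros Hp. induction k; intros H Hk. lia.
  rewrite Nat2Z.inj_succ, Z.pow_succ_r in H by lia.
  destruct (prime_mult p Hp _ _ H); auto. destruct k. simpl in H0. exfalso. apply Z.divide_pos_le in H0; [|lia].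
  pose proof (prime_ge_2 p Hp). lia. apply IHk; auto. lia.
Qed.

Lemma divide_pow a b k : (a | b) -> (a ^ Z.of_nat k | b ^ Z.of_nat k).
Proof. intros [c ->]. rewrite Z.pow_mul_l. apply Z.divide_mul_r. apply Z.divide_refl. Qed.

Lemma rel_prime_pow_l a b k : rel_prime a b -> rel_prime (a ^ Z.of_nat k) b.
Proof.
  intros H. induction k. simpl. apply rel_prime_1.
  rewrite Nat2Z.inj_succ, Z.pow_succ_r by lia. apply rel_prime_sym. apply rel_prime_mult; apply rel_prime_sym; auto.
Qed.

Lemma rel_prime_div_mul a b n : rel_prime a b -> (a | n) -> (b | n) -> (a * b | n).
Proof.
  intros H [x Hx] Hb. rewrite Hx in Hb. rewrite Z.mul_comm in Hb.
  apply Gauss in Hb. destruct Hb as [y Hy]. exists y. rewrite Hx, Hy. ring. apply rel_prime_sym; auto.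
Qed.

Lemma eqb_mod_divide n x : 0 < x -> Z.eqb (n mod x) 0 = true <-> (x | n).
Proof. intros. rewrite Z.eqb_eq. apply Z.mod_divide. lia. Qed.

Definition Fm (k : nat) (n d : Z) : Z := if Z.eqb (n mod d ^ Z.of_nat k) 0 then mu d else 0.

Lemma mob_notfree k n X : (1 <= k)%nat -> 1 <= n <= Z.of_nat X ->
  ~ kfree k n -> S1 (fun d => IZR (Fm k n d)) X = 0%R.
Proof.
  intros Hk Hn Hnf. unfold kfree in Hnf.
  apply not_all_ex_not in Hnf. destruct Hnf as [p Hnf]. apply imply_to_and in Hnf. destruct Hnf as [Hp Hpk].
  apply NNPP in Hpk. pose proof (prime_ge_2 p Hp) as Hp2.
  assert (Ep : p = Z.of_nat (Z.to_nat p)) by lia.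
  apply (pair_zero (Z.to_nat p)); [lia| | |].
  - intros d Hd HP. rewrite <- Ep. unfold Fm.
    assert (Hnd : ~ (p | d)). { intro Hc. unfold Pd in HP. rewrite <- Ep in HP.
      apply eqb_mod_divide in Hc; [|lia]. congruence. }
    destruct (mu_props p Hp (Z.to_nat d) d ltac:(lia)) as [M1 _]. rewrite (M1 Hnd).
    assert (Hpd : 0 < (p * d) ^ Z.of_nat k) by (apply Z.pow_pos_nonneg; lia).
    assert (Hd' : 0 < d ^ Z.of_nat k) by (apply Z.pow_pos_nonneg; lia).
    destruct (Z.eqb (n mod (p * d) ^ Z.of_nat k) 0) eqn:E1; destruct (Z.eqb (n mod d ^ Z.of_nat k) 0) eqn:E2;
      try (rewrite opp_IZR; reflexivity); try (simpl; lra).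
    + exfalso. apply eqb_mod_divide in E1; auto. assert (d ^ Z.of_nat k | n).
      { eapply Z.divide_trans; [|apply E1]. rewrite Z.pow_mul_l. apply Z.divide_mul_r. apply Z.divide_refl. }
      apply eqb_mod_divide in H; auto. congruence.
    + exfalso. apply eqb_mod_divide in E2; auto.
      assert ((p * d) ^ Z.of_nat k | n).
      { rewrite Z.pow_mul_l. apply rel_prime_div_mul; auto.
        apply rel_prime_pow_l. apply rel_prime_sym. apply rel_prime_pow_l. apply rel_prime_sym.
        apply prime_rel_prime; auto. }
      apply eqb_mod_divide in H; auto. congruence.
  - intros d Hd. rewrite <- Ep. unfold Fm.
    destruct (mu_props p Hp (Z.to_nat d) d ltac:(lia)) as [_ M2]. rewrite M2.
    destruct (Z.eqb _ 0); auto.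
  - intros d Hd. unfold Fm.
    destruct (Z.eqb_spec (n mod d ^ Z.of_nat k) 0) as [E|E]; auto.
    exfalso. apply Z.mod_divide in E. apply Z.divide_pos_le in E; [|lia].
    pose proof (pow_ge_base d k ltac:(lia) Hk). lia.
    pose proof (pow_ge1 d k ltac:(lia)). lia.
Qed.

Lemma mob_free k n X : (1 <= k)%nat -> 1 <= n <= Z.of_nat X ->
  kfree k n -> S1 (fun d => IZR (Fm k n d)) X = 1%R.
Proof.
  intros Hk Hn Hf. destruct X. lia.
  unfold S1. rewrite sumR_shift.
  rewrite (sumR_ext _ (fun _ => 0%R)). rewrite sumR_const.
  - unfold Fm. simpl Z.of_nat. rewrite Z.pow_1_l by lia. rewrite Z.mod_1_r. simpl. rewrite mu_1. simpl. lra.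
  - intros i Hi. unfold Fm. destruct (Z.eqb_spec (n mod Z.of_nat (S (S i)) ^ Z.of_nat k) 0) as [E|E]; auto.
    exfalso. set (d := Z.of_nat (S (S i))) in *.
    assert (Hd : 2 <= d) by (unfold d; lia).
    apply Z.mod_divide in E; [|pose proof (pow_ge1 d k ltac:(lia)); lia].
    apply (Hf (spf d) (spf_prime d Hd)).
    eapply Z.divide_trans; [|apply E]. apply divide_pow. apply spf_spec; auto.
Qed.

Lemma kfree1 n : 1 <= n -> kfree 1 n -> n = 1.
Proof.
  intros Hn Hf. destruct (Z.eq_dec n 1); auto. exfalso.
  apply (Hf (spf n) (spf_prime n ltac:(lia))). change (Z.of_nat 1) with 1. rewrite Z.pow_1_r. apply spf_spec; lia.
Qed.

Lemma kfree1' : kfree 1 1.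
Proof. intros p Hp H. change (Z.of_nat 1) with 1 in H. rewrite Z.pow_1_r in H. apply Z.divide_pos_le in H; [|lia]. pose proof (prime_ge_2 p Hp). lia. Qed.

End P10.
Import P10.

Module P11.
Local Open Scope R_scope.

Definition zt (k : nat) (i : nat) : R := / (INR (i + 1)) ^ k.

Lemma zt_pos k i : 0 < zt k i.
Proof. unfold zt. apply Rinv_0_lt_compat. apply pow_lt. apply lt_0_INR. lia. Qed.

Lemma zt_le k i : (2 <= k)%nat -> zt k i <= / (INR (i + 1) * INR (i + 1)).
Proof.
  intros Hk. unfold zt. apply Rinv_le_contravar. 
  assert (0 < INR (i+1)) by (apply lt_0_INR; lia). nra.
  assert (1 <= INR (i + 1)) by (apply (le_INR 1); lia).
  replace k with (2 + (k - 2))%nat by lia. rewrite pow_add. simpl.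
  assert (1 <= INR (i+1) ^ (k - 2)) by (apply pow_R1_Rle; lra). nra.
Qed.

Lemma zt_tail k Y m : (2 <= k)%nat -> (1 <= Y)%nat ->
  sumR (fun i => zt k (Y + i)) m <= / INR Y - / INR (Y + m).
Proof.
  intros Hk HY. induction m.
  - simpl. rewrite Nat.add_0_r. lra.
  - rewrite sumR_S. pose proof (zt_le k (Y + m) Hk).
    assert (1 <= INR (Y + m)) by (apply (le_INR 1); lia).
    replace (INR (Y + m + 1)) with (INR (Y + m) + 1) in H by (rewrite (plus_INR (Y+m) 1), INR_1; lra).
    replace (INR (Y + S m)) with (INR (Y + m) + 1) by (replace (Y + S m)%nat with (S (Y + m)) by lia; rewrite S_INR; lra).
    assert (/ ((INR (Y + m) + 1) * (INR (Y + m) + 1)) <= / INR (Y + m) - / (INR (Y + m) + 1)).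
    { replace (/ INR (Y + m) - / (INR (Y + m) + 1)) with (/ (INR (Y + m) * (INR (Y + m) + 1))) by (field; lra).
      apply Rinv_le_contravar; nra. }
    lra.
Qed.

Lemma partial_le k Y n : (2 <= k)%nat -> (1 <= Y)%nat -> sumR (zt k) n <= sumR (zt k) Y + / INR Y.
Proof.
  intros Hk HY. destruct (le_lt_dec n Y).
  - replace Y with (n + (Y - n))%nat by lia. rewrite sumR_split.
    assert (0 <= sumR (fun i => zt k (n + i)) (Y - n)) by (apply sumR_nonneg; intros; left; apply zt_pos).
    assert (0 < / INR (n + (Y - n))) by (apply Rinv_0_lt_compat, lt_0_INR; lia). lra.
  - replace n with (Y + (n - Y))%nat by lia. rewrite sumR_split.
    pose proof (zt_tail k Y (n - Y) Hk HY).
    assert (0 < / INR (Y + (n - Y))) by (apply Rinv_0_lt_compat, lt_0_INR; lia). lra.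
Qed.

Lemma partial_ge k Y n : (Y <= n)%nat -> sumR (zt k) Y <= sumR (zt k) n.
Proof.
  intros H. replace n with (Y + (n - Y))%nat by lia. rewrite sumR_split.
  assert (0 <= sumR (fun i => zt k (Y + i)) (n - Y)) by (apply sumR_nonneg; intros; left; apply zt_pos). lra.
Qed.

Lemma sum_n_sumR (a : nat -> R) n : sum_n a n = sumR a (S n).
Proof.
  induction n. rewrite sum_O. simpl. lra.
  rewrite sum_Sn, IHn. reflexivity.
Qed.

Lemma zeta_bounds k Y : (2 <= k)%nat -> (1 <= Y)%nat ->
  sumR (zt k) Y <= zeta_nat k <= sumR (zt k) Y + / INR Y.
Proof.
  intros Hk HY.
  assert (E : zeta_nat k = Series (zt k)).
  { unfold zeta_nat, zt. f_equal. }
  assert (Hinc : forall n, sum_n (zt k) n <= sum_n (zt k) (S n)).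
  { intros n. rewrite !sum_n_sumR. rewrite (sumR_S _ (S n)). pose proof (zt_pos k (S n)). lra. }
  destruct (ex_finite_lim_seq_incr (sum_n (zt k)) (sumR (zt k) 1 + / INR 1) Hinc) as [l Hl].
  { intros n. rewrite sum_n_sumR. apply partial_le; lia. }
  assert (Series (zt k) = l) by (unfold Series; rewrite (is_lim_seq_unique _ _ Hl); auto).
  rewrite E, H. split.
  - pose proof (is_lim_seq_incr_compare _ _ Hl Hinc (Y - 1)). rewrite sum_n_sumR in H0.
    replace (S (Y - 1)) with Y in H0 by lia. auto.
  - assert (Rbar_le l (sumR (zt k) Y + / INR Y)).
    { apply (is_lim_seq_le (sum_n (zt k)) (fun _ => sumR (zt k) Y + / INR Y) l (sumR (zt k) Y + / INR Y)); auto.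
      intros n. rewrite sum_n_sumR. apply partial_le; lia. apply is_lim_seq_const. }
    simpl in H0. auto.
Qed.

End P11.
Import P11.

Module P12.
Local Open Scope R_scope.

Lemma S1_scal c G X : S1 (fun d => c * G d) X = c * S1 G X.
Proof. unfold S1. apply sumR_scal. Qed.

Lemma S1_swap (G : Z -> Z -> R) X Y : S1 (fun a => S1 (fun b => G a b) Y) X = S1 (fun b => S1 (fun a => G a b) X) Y.
Proof. unfold S1. apply (sumR_swap (fun i j => G (Z.of_nat (S i)) (Z.of_nat (S j)))). Qed.

Lemma S1_zt k Y : S1 (fun e => / IZR e ^ k) Y = sumR (zt k) Y.
Proof. unfold S1, zt. apply sumR_ext. intros i _. rewrite <- INR_IZR_INZ. f_equal. f_equal. f_equal. lia. Qed.

Lemma Fm1 n d : Fm 1 n d = if Z.eqb (n mod d) 0 then mu d else 0%Z.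
Proof. unfold Fm. change (Z.of_nat 1) with 1%Z. rewrite Z.pow_1_r. auto. Qed.

Lemma fin_id k X : (1 <= X)%nat ->
  S1 (fun d => IZR (mu d) / IZR d ^ k * sumR (zt k) (X / Z.to_nat d)) X = 1.
Proof.
  intros HX.
  transitivity (S1 (fun n => / IZR n ^ k * S1 (fun d => IZR (Fm 1 n d)) X) X).
  2:{ destruct X. lia. unfold S1. rewrite sumR_shift.
      rewrite (sumR_ext (fun i => / IZR (Z.of_nat (S (S i))) ^ k * sumR (fun j => IZR (Fm 1 (Z.of_nat (S (S i))) (Z.of_nat (S j)))) (S X)) (fun _ => 0)).
      - rewrite sumR_const. fold (S1 (fun d => IZR (Fm 1 (Z.of_nat 1) d)) (S X)).
        rewrite mob_free; try lia. simpl Z.of_nat. rewrite pow1. lra. apply kfree1'.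
      - intros i Hi. fold (S1 (fun d => IZR (Fm 1 (Z.of_nat (S (S i))) d)) (S X)).
        rewrite mob_notfree; try lia. lra. intro Hf. apply kfree1 in Hf; lia. }
  rewrite (S1_ext (fun n => / IZR n ^ k * S1 (fun d => IZR (Fm 1 n d)) X) (fun n => S1 (fun d => / IZR n ^ k * IZR (Fm 1 n d)) X)).
  2:{ intros. rewrite S1_scal. auto. }
  rewrite S1_swap. apply S1_ext. intros d Hd. symmetry.
  rewrite (S1_ext (fun n => / IZR n ^ k * IZR (Fm 1 n d)) (fun n => if Pd (Z.to_nat d) n then IZR (mu d) / IZR n ^ k else 0)).
  2:{ intros n Hn. unfold Pd. rewrite Fm1. rewrite Z2Nat.id by lia.
      destruct (Z.eqb _ 0); simpl; lra. }
  rewrite multiples by lia.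
  rewrite <- S1_zt. rewrite <- S1_scal. apply S1_ext. intros e He.
  rewrite Z2Nat.id by lia. rewrite mult_IZR, Rpow_mult_distr.
  assert (0 < IZR d) by (apply IZR_lt; lia). assert (0 < IZR e) by (apply IZR_lt; lia).
  assert (0 < IZR d ^ k) by (apply pow_lt; lra). assert (0 < IZR e ^ k) by (apply pow_lt; lra).
  field. lra.
Qed.

Lemma mu_coef_bound k d : (2 <= k)%nat -> (1 <= d)%nat ->
  Rabs (IZR (mu (Z.of_nat d)) / IZR (Z.of_nat d) ^ k) <= zt 2 (d - 1).
Proof.
  intros Hk Hd. unfold zt. replace (d - 1 + 1)%nat with d by lia. rewrite <- INR_IZR_INZ.
  assert (1 <= INR d) by (apply (le_INR 1); lia).
  assert (Hm : Rabs (IZR (mu (Z.of_nat d))) <= 1).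
  { pose proof (mu_abs (Z.of_nat d)). apply Rabs_le. split; [apply (IZR_le (-1))|apply (IZR_le _ 1)]; lia. }
  unfold Rdiv. rewrite Rabs_mult. rewrite Rabs_inv. rewrite (Rabs_right (INR d ^ k)) by (apply Rle_ge, pow_le; lra).
  assert (INR d ^ 2 <= INR d ^ k) by (apply Rle_pow; auto).
  assert (0 < INR d ^ 2) by (apply pow_lt; lra).
  assert (/ INR d ^ k <= / INR d ^ 2) by (apply Rinv_le_contravar; lra).
  assert (0 <= / INR d ^ k) by (left; apply Rinv_0_lt_compat; lra).
  pose proof (Rabs_pos (IZR (mu (Z.of_nat d)))). nra.
Qed.

Lemma zeta_pos k : (2 <= k)%nat -> 1 <= zeta_nat k.
Proof. intros. destruct (zeta_bounds k 1 H ltac:(lia)). unfold zt in H0. simpl sumR in H0. replace (INR (0+1)) with 1 in H0 by (simpl; lra). rewrite pow1, Rinv_1 in H0. lra. Qed.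

Lemma zeta_est k (R : nat) : (2 <= k)%nat -> (1 <= R)%nat ->
  Rabs (S1 (fun d => IZR (mu d) / IZR d ^ k) (R * R) - / zeta_nat k) <= 3 / INR R.
Proof.
  intros Hk HR. set (X := (R * R)%nat). set (z := zeta_nat k).
  pose proof (zeta_pos k Hk) as Hz. fold z in Hz.
  assert (HR' : 1 <= INR R) by (apply (le_INR 1); lia).
  set (c := fun d => IZR (mu d) / IZR d ^ k).
  assert (ED : S1 c X * z - 1 = S1 (fun d => c d * (z - sumR (zt k) (X / Z.to_nat d))) X).
  { rewrite <- (fin_id k X) by (unfold X; nia).
    unfold S1. rewrite <- sumR_scal_r, <- sumR_minus. apply sumR_ext. intros. unfold c. lra. }
  assert (HB : Rabs (S1 c X * z - 1) <= 3 / INR R).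
  { rewrite ED. unfold S1. eapply Rle_trans. apply sumR_abs.
    replace X with (R + (X - R))%nat at 1 by (unfold X; nia). rewrite sumR_split.
    assert (HW : forall i, (i < X)%nat -> 0 <= z - sumR (zt k) (X / Z.to_nat (Z.of_nat (S i))) <= / INR (X / S i)).
    { intros i Hi. rewrite Nat2Z.id. assert (1 <= X / S i)%nat by (apply Nat.div_le_lower_bound; lia).
      destruct (zeta_bounds k (X / S i) Hk H). fold z in H0, H1. lra. }
    assert (P1 : sumR (fun i => Rabs (c (Z.of_nat (S i)) * (z - sumR (zt k) (X / Z.to_nat (Z.of_nat (S i)))))) R <= 2 / INR R).
    { apply Rle_trans with (sumR (fun i => zt 2 i * / INR R) R).
      - apply sumR_le. intros i Hi. rewrite Rabs_mult. unfold c.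
        pose proof (mu_coef_bound k (S i) Hk ltac:(lia)). replace (S i - 1)%nat with i in H by lia.
        destruct (HW i ltac:(unfold X; nia)).
        assert (INR R <= INR (X / S i)) by (apply le_INR; apply Nat.div_le_lower_bound; unfold X; nia).
        assert (/ INR (X / S i) <= / INR R) by (apply Rinv_le_contravar; lra).
        rewrite (Rabs_right (z - _)) by lra. pose proof (Rabs_pos (IZR (mu (Z.of_nat (S i))) / IZR (Z.of_nat (S i)) ^ k)).
        pose proof (zt_pos 2 i). apply Rmult_le_compat; lra.
      - rewrite sumR_scal_r. pose proof (partial_le 2 1 R ltac:(lia) ltac:(lia)). unfold zt in H at 2. simpl in H.
        assert (0 < / INR R) by (apply Rinv_0_lt_compat; lra). unfold Rdiv. nra. }
    assert (P2 : sumR (fun i => Rabs (c (Z.of_nat (S (R + i))) * (z - sumR (zt k) (X / Z.to_nat (Z.of_nat (S (R + i))))))) (X - R) <= / INR R).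
    { apply Rle_trans with (sumR (fun i => zt 2 (R + i)) (X - R)).
      - apply sumR_le. intros i Hi. rewrite Rabs_mult. unfold c.
        pose proof (mu_coef_bound k (S (R + i)) Hk ltac:(lia)). replace (S (R + i) - 1)%nat with (R + i)%nat in H by lia.
        destruct (HW (R + i)%nat ltac:(lia)).
        assert (1 <= INR (X / S (R + i))) by (apply (le_INR 1); apply Nat.div_le_lower_bound; unfold X; nia).
        assert (/ INR (X / S (R + i)) <= 1) by (rewrite <- Rinv_1; apply Rinv_le_contravar; lra).
        rewrite (Rabs_right (z - _)) by lra. pose proof (Rabs_pos (IZR (mu (Z.of_nat (S (R + i)))) / IZR (Z.of_nat (S (R + i))) ^ k)).
        pose proof (zt_pos 2 (R + i)). 
        apply Rle_trans with (zt 2 (R + i) * 1). apply Rmult_le_compat; lra. lra.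
      - pose proof (zt_tail 2 R (X - R) ltac:(lia) HR).
        assert (0 < / INR (R + (X - R))) by (apply Rinv_0_lt_compat, lt_0_INR; lia). lra. }
    unfold Rdiv in *. lra. }
  replace (S1 c X - / z) with ((S1 c X * z - 1) / z) by (field; lra).
  unfold Rdiv at 1. rewrite Rabs_mult, Rabs_inv, (Rabs_right z) by lra.
  apply Rle_trans with (Rabs (S1 c X * z - 1) * 1).
  apply Rmult_le_compat_l. apply Rabs_pos. rewrite <- Rinv_1. apply Rinv_le_contravar; lra. lra.
Qed.

End P12.
Import P12.

Module P13.
Local Open Scope R_scope.

Lemma exp_nat n x : exp (INR n * x) = exp x ^ n.
Proof. induction n. simpl. rewrite Rmult_0_l, exp_0. auto.
  rewrite S_INR, Rmult_plus_distr_r, exp_plus, IHn, Rmult_1_l. simpl. ring. Qed.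

Lemma exp1_lt_3 : exp 1 < 3.
Proof.
  pose proof (exp_ineq1 (- / 10) ltac:(lra)).
  assert (exp (/10) < 10/9).
  { assert (exp (/10) * exp (- / 10) = 1) by (rewrite <- exp_plus; replace (/10 + - /10) with 0 by lra; apply exp_0).
    assert (0 < exp (/10)) by apply exp_pos. nra. }
  replace 1 with (INR 10 * / 10) by (simpl; lra). rewrite exp_nat.
  assert (0 < exp (/10)) by apply exp_pos.
  apply Rle_lt_trans with ((10/9)^10). apply pow_incr. lra. simpl; lra.
Qed.

Lemma lnln3 : 0 < ln (ln 3).
Proof.
  rewrite <- ln_1. apply ln_increasing. lra.
  rewrite <- (ln_exp 1). apply ln_increasing. apply exp_pos. apply exp1_lt_3.
Qed.

Lemma ln_lt_x x : 0 < x -> ln x < x.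
Proof.
  intros Hx. rewrite <- (ln_exp x) at 2. apply ln_increasing; auto.
  pose proof (exp_ineq1 x ltac:(lra)). lra.
Qed.

Lemma root_exists (N E : nat) : (1 <= N)%nat -> (1 <= E)%nat ->
  exists P, (1 <= P)%nat /\ (P ^ E <= N)%nat /\ (N < (P + 1) ^ E)%nat.
Proof.
  intros HN HE. induction N. lia.
  destruct (Nat.eq_dec N 0) as [->|HN0].
  - exists 1%nat. split. lia. rewrite Nat.pow_1_l. split. lia.
    replace (1 + 1)%nat with 2%nat by lia. assert (2 ^ 1 <= 2 ^ E)%nat by (apply Nat.pow_le_mono_r; lia). rewrite Nat.pow_1_r in H. lia.
  - destruct IHN as [P [H1 [H2 H3]]]. lia.
    destruct (Nat.eq_dec (S N) ((P + 1) ^ E)) as [E1|E1].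
    + exists (P + 1)%nat. split. lia. split. lia. rewrite E1. apply Nat.pow_lt_mono_l; lia.
    + exists P. split; auto. split. lia. lia.
Qed.

Lemma big_tail k (P X : nat) : (2 <= k)%nat -> (1 <= P)%nat ->
  sumR (fun i => if Nat.ltb (P ^ 4) (S i ^ k) then / INR (S i ^ k) else 0) X <= 2 / INR (P * P).
Proof.
  intros Hk HP. set (Q := (P * P)%nat).
  assert (HQ : 1 <= INR Q) by (apply (le_INR 1); unfold Q; nia).
  set (g := fun i => if Nat.ltb i Q then / INR (Q * Q) else zt 2 i).
  apply Rle_trans with (sumR g X).
  { apply sumR_le. intros i Hi. unfold g.
    destruct (Nat.ltb_spec (P ^ 4) (S i ^ k)) as [L|L].
    - assert (Hq : 0 < INR (S i ^ k)) by (apply lt_0_INR; apply Nat.neq_0_lt_0; apply Nat.pow_nonzero; lia).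
      destruct (Nat.ltb_spec i Q).
      + apply Rinv_le_contravar. apply lt_0_INR; unfold Q; nia. apply le_INR.
        replace (Q * Q)%nat with (P ^ 4)%nat by (unfold Q; simpl; ring). lia.
      + unfold zt. rewrite pow_INR. apply Rinv_le_contravar. apply pow_lt. apply lt_0_INR; lia.
        replace (i + 1)%nat with (S i) by lia. apply Rle_pow. apply (le_INR 1); lia. auto.
    - destruct (Nat.ltb_spec i Q). left; apply Rinv_0_lt_compat, lt_0_INR; unfold Q; nia.
      left; apply zt_pos. }
  apply Rle_trans with (sumR g (Q + X)).
  { replace (Q + X)%nat with (X + Q)%nat by lia. rewrite sumR_split.
    assert (0 <= sumR (fun i => g (X + i)%nat) Q). apply sumR_nonneg. intros i _. unfold g.
    destruct (Nat.ltb _ _). left; apply Rinv_0_lt_compat, lt_0_INR; unfold Q; nia. left; apply zt_pos.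
    lra. }
  rewrite sumR_split.
  rewrite (sumR_ext g (fun _ => / INR (Q * Q))) by (intros i Hi; unfold g; destruct (Nat.ltb_spec i Q); lia || auto).
  rewrite (sumR_ext (fun i => g (Q + i)%nat) (fun i => zt 2 (Q + i))) by (intros i Hi; unfold g; destruct (Nat.ltb_spec (Q + i) Q); lia || auto).
  rewrite sumR_const. pose proof (zt_tail 2 Q X ltac:(lia) ltac:(unfold Q; nia)).
  assert (0 < / INR (Q + X)) by (apply Rinv_0_lt_compat, lt_0_INR; unfold Q; nia).
  rewrite mult_INR. replace (INR Q * / (INR Q * INR Q)) with (/ INR Q) by (field; lra).
  unfold Rdiv. lra.
Qed.

Lemma dvdI_diff (q : nat) n : (1 <= q)%nat ->
  dvdI q n = IZR (n / Z.of_nat q) - IZR ((n - 1) / Z.of_nat q).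
Proof.
  intros Hq. unfold dvdI. pose proof (div_succ_diff (n - 1) (Z.of_nat q) ltac:(lia)).
  replace (n - 1 + 1)%Z with n in H by ring.
  destruct (Z.eqb _ 0); apply (f_equal IZR) in H; rewrite minus_IZR in H; simpl in H; lra.
Qed.

Lemma A_le alpha beta (Ha : alpha > 1) (N q : nat) : (1 <= q)%nat ->
  sumR (fun j => dvdI q (fb alpha beta (gb alpha beta 0 + Z.of_nat j))) (Z.to_nat (gb alpha beta N - gb alpha beta 0))
  <= INR N / INR q.
Proof.
  intros Hq. set (f := fun j : nat => fb alpha beta (gb alpha beta 0 + Z.of_nat j)).
  set (qz := Z.of_nat q).
  assert (Hqr : 0 < INR q) by (apply lt_0_INR; lia).
  assert (Hinc : forall j, (f j + 1 <= f (S j))%Z).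
  { intros j. unfold f. replace (gb alpha beta 0 + Z.of_nat (S j))%Z with (gb alpha beta 0 + Z.of_nat j + 1)%Z by lia.
    apply fb_incr; auto. }
  assert (Cl : forall J, sumR (fun j => dvdI q (f j)) (S J) <= IZR (f J / qz) - IZR ((f O - 1) / qz)).
  { induction J.
    - simpl. rewrite dvdI_diff by auto. fold qz. lra.
    - rewrite sumR_S. rewrite (dvdI_diff q (f (S J))) by auto. fold qz.
      assert (f J / qz <= (f (S J) - 1) / qz)%Z by (apply Z.div_le_mono; [unfold qz; lia|specialize (Hinc J); lia]).
      apply IZR_le in H. lra. }
  set (M := Z.to_nat (gb alpha beta N - gb alpha beta 0)).
  destruct M as [|J] eqn:EM.
  - simpl. unfold Rdiv. apply Rmult_le_pos. apply pos_INR. left; apply Rinv_0_lt_compat; auto.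
  - eapply Rle_trans. apply Cl.
    pose proof (fb_range alpha beta Ha N J ltac:(lia)). fold (f J) in H.
    pose proof (fb_range alpha beta Ha N 0 ltac:(lia)). fold (f O) in H0. simpl Z.of_nat in H0.
    replace (gb alpha beta 0 + 0)%Z with (gb alpha beta 0) in H0 by lia.
    assert (0 <= (f O - 1) / qz)%Z by (apply Z.div_pos; unfold f, qz in *; simpl in *; lia).
    assert (f J / qz <= Z.of_nat N / qz)%Z by (apply Z.div_le_mono; unfold qz; lia).
    assert (IZR (Z.of_nat N / qz) * INR q <= INR N).
    { rewrite INR_IZR_INZ. rewrite INR_IZR_INZ. fold qz. rewrite <- mult_IZR. apply IZR_le.
      rewrite Z.mul_comm. apply Z.mul_div_le. unfold qz; lia. }
    apply IZR_le in H1. apply IZR_le in H2.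
    assert (IZR (Z.of_nat N / qz) <= INR N / INR q).
    { apply Rmult_le_reg_r with (INR q); auto. unfold Rdiv. rewrite Rmult_assoc, Rinv_l by lra. lra. }
    lra.
Qed.

End P13.
Import P13.

Module P14.
Local Open Scope R_scope.

Definition Mn alpha beta N := Z.to_nat (gb alpha beta N - gb alpha beta 0).
Definition Ad alpha beta k N (d : Z) :=
  sumR (fun j => dvdI (Z.to_nat (d ^ Z.of_nat k)) (fb alpha beta (gb alpha beta 0 + Z.of_nat j))) (Mn alpha beta N).

Lemma count_decomp alpha beta k N : alpha > 1 -> (1 <= k)%nat ->
  INR (count_kfree_beatty alpha beta k N) = S1 (fun d => IZR (mu d) * Ad alpha beta k N d) (N * N).
Proof.
  intros Ha Hk. unfold count_kfree_beatty.
  rewrite (count_reindex alpha beta Ha (kfree k)). fold (Mn alpha beta N).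
  rewrite (sumR_ext _ (fun j => S1 (fun d => IZR (Fm k (fb alpha beta (gb alpha beta 0 + Z.of_nat j)) d)) (N * N))).
  2:{ intros j Hj. pose proof (fb_range alpha beta Ha N j Hj).
      assert (HNN : (1 <= fb alpha beta (gb alpha beta 0 + Z.of_nat j) <= Z.of_nat (N * N))%Z) by (rewrite Nat2Z.inj_mul; nia).
      unfold indic. destruct (excluded_middle_informative _) as [Hf|Hf].
      - rewrite mob_free; auto. 
      - rewrite mob_notfree; auto. }
  unfold S1. rewrite (sumR_swap (fun j i => IZR (Fm k (fb alpha beta (gb alpha beta 0 + Z.of_nat j)) (Z.of_nat (S i))))).
  apply sumR_ext. intros i _. unfold Ad. rewrite <- sumR_scal. apply sumR_ext. intros j _.
  unfold Fm, dvdI. rewrite Z2Nat.id by (apply Z.pow_nonneg; lia).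
  destruct (Z.eqb _ 0); lra.
Qed.

Lemma INR_q (d : Z) k : (1 <= d)%Z -> INR (Z.to_nat (d ^ Z.of_nat k)) = IZR d ^ k.
Proof. intros. rewrite INR_IZR_INZ, Z2Nat.id by (apply Z.pow_nonneg; lia). rewrite <- pow_IZR. auto. Qed.

Lemma per_d_small alpha beta k N c0 T (Y : nat) (d : Z) : alpha > 1 -> 0 < c0 -> (1 <= Y)%nat -> (1 <= d)%Z ->
  (forall n : nat, (1 <= n)%nat -> c0 / INR n ^ T <= dist_nint (alpha * INR n)) ->
  Rabs (Ad alpha beta k N d - INR (Mn alpha beta N) / IZR d ^ k)
    <= 3 * INR (Mn alpha beta N) / INR Y + IZR d ^ k * INR Y ^ T / c0 + 1.
Proof.
  intros Ha Hc0 HY Hd1 Hd.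
  set (q := Z.to_nat (d ^ Z.of_nat k)).
  assert (Hq1 : (1 <= q)%nat) by (unfold q; pose proof (pow_ge1 d k Hd1); lia).
  assert (Eq : INR q = IZR d ^ k) by (apply INR_q; auto).
  set (x := INR q * INR Y ^ T / c0).
  assert (Hx : 0 < x) by (unfold x; apply Rmult_lt_0_compat; [apply Rmult_lt_0_compat; [apply lt_0_INR; lia|apply pow_lt, lt_0_INR; lia]|apply Rinv_0_lt_compat; auto]).
  set (Bq := Z.to_nat (up x)).
  destruct (archimed x) as [U1 U2].
  assert (Hup : (1 <= up x)%Z) by (assert (0 < up x)%Z by (apply lt_IZR; simpl; lra); lia).
  assert (EB : INR Bq = IZR (up x)) by (unfold Bq; rewrite INR_IZR_INZ, Z2Nat.id by lia; auto).
  assert (HBq1 : (1 <= Bq)%nat) by (unfold Bq; lia).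
  assert (HBx : INR q * INR Y ^ T / c0 <= INR Bq) by (rewrite EB; change (INR q * INR Y ^ T / c0) with x; lra).
  pose proof (disc_q alpha c0 T q Y Bq Hc0 Hq1 HY HBq1 Hd HBx (Mn alpha beta N) ((alpha * IZR (gb alpha beta 0) + beta) / INR q)).
  rewrite (sumR_ext _ (fun j => dvdI q (fb alpha beta (gb alpha beta 0 + Z.of_nat j)))) in H.
  2:{ intros j _. rewrite tm_dvd by auto. reflexivity. }
  change (sumR (fun j => dvdI q (fb alpha beta (gb alpha beta 0 + Z.of_nat j))) (Mn alpha beta N)) with (Ad alpha beta k N d) in H.
  assert (INR Bq <= IZR d ^ k * INR Y ^ T / c0 + 1) by (rewrite EB, <- Eq; change (INR q * INR Y ^ T / c0) with x; lra).
  rewrite Eq in H. lra.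
Qed.

Lemma per_d_large alpha beta k N (d : Z) : alpha > 1 -> (1 <= d)%Z ->
  Rabs (Ad alpha beta k N d - INR (Mn alpha beta N) / IZR d ^ k) <= INR N / IZR d ^ k + INR (Mn alpha beta N) / IZR d ^ k.
Proof.
  intros Ha Hd1.
  set (q := Z.to_nat (d ^ Z.of_nat k)).
  assert (Hq1 : (1 <= q)%nat) by (unfold q; pose proof (pow_ge1 d k Hd1); lia).
  assert (Eq : INR q = IZR d ^ k) by (apply INR_q; auto).
  pose proof (A_le alpha beta Ha N q Hq1). fold (Mn alpha beta N) in H.
  change (sumR (fun j => dvdI q (fb alpha beta (gb alpha beta 0 + Z.of_nat j))) (Mn alpha beta N)) with (Ad alpha beta k N d) in H.
  rewrite Eq in H.
  assert (0 <= Ad alpha beta k N d).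
  { unfold Ad. apply sumR_nonneg. intros. unfold dvdI. destruct (Z.eqb _ _); lra. }
  assert (0 < IZR d ^ k) by (apply pow_lt; apply IZR_lt; lia).
  assert (0 <= INR (Mn alpha beta N) / IZR d ^ k) by (unfold Rdiv; apply Rmult_le_pos; [apply pos_INR|left; apply Rinv_0_lt_compat; auto]).
  apply Rabs_le. lra.
Qed.

Lemma count_lt (Q X : nat) c : sumR (fun i => if Nat.ltb i Q then c else 0) X = INR (Nat.min X Q) * c.
Proof.
  induction X. simpl. lra. rewrite sumR_S, IHX.
  destruct (Nat.ltb_spec X Q).
  - replace (Nat.min (S X) Q) with (S (Nat.min X Q)) by lia. rewrite S_INR. lra.
  - replace (Nat.min (S X) Q) with (Nat.min X Q) by lia. lra.
Qed.

Lemma E1_bound alpha beta k N c0 T P : alpha > 1 -> 0 < c0 -> (2 <= k)%nat -> (1 <= P)%nat ->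
  (forall n : nat, (1 <= n)%nat -> c0 / INR n ^ T <= dist_nint (alpha * INR n)) ->
  INR (Mn alpha beta N) <= 2 * INR N ->
  (P ^ (4 * T + 8) <= N)%nat ->
  Rabs (S1 (fun d => IZR (mu d) * (Ad alpha beta k N d - INR (Mn alpha beta N) / IZR d ^ k)) (N * N))
   <= (13 + / c0) * INR N / INR (P * P).
Proof.
  intros Ha Hc0 Hk HP Hd HM HPN.
  set (MR := INR (Mn alpha beta N)).
  assert (HM' : MR <= 2 * INR N) by exact HM. clear HM.
  set (Q := (P * P)%nat).
  assert (HQ : 1 <= INR Q) by (apply (le_INR 1); unfold Q; nia).
  set (Y := (P ^ 4)%nat).
  assert (HY : (1 <= Y)%nat) by (unfold Y; pose proof (Nat.pow_le_mono_l 1 P 4 HP); rewrite Nat.pow_1_l in H; lia).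
  assert (EY : INR Y = INR Q * INR Q) by (unfold Y, Q; rewrite <- mult_INR; f_equal; simpl; ring).
  assert (HMR : 0 <= MR) by apply pos_INR.
  set (Es := 3 * MR / INR Y + INR Y * INR Y ^ T / c0 + 1).
  set (b := fun i : nat => (if Nat.ltb i Q then Es else 0) +
                (if Nat.ltb (P ^ 4) (S i ^ k) then 3 * INR N * / INR (S i ^ k) else 0)).
  assert (Hb : forall i, Rabs (IZR (mu (Z.of_nat (S i))) * (Ad alpha beta k N (Z.of_nat (S i)) - MR / IZR (Z.of_nat (S i)) ^ k)) <= b i).
  { intros i. rewrite Rabs_mult.
    assert (Hm : Rabs (IZR (mu (Z.of_nat (S i)))) <= 1).
    { pose proof (mu_abs (Z.of_nat (S i))). apply Rabs_le. split; [apply (IZR_le (-1))|apply (IZR_le _ 1)]; lia. }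
    assert (Eq : IZR (Z.of_nat (S i)) ^ k = INR (S i ^ k)) by (rewrite pow_INR, INR_IZR_INZ; auto).
    assert (Hq0 : 0 < INR (S i ^ k)) by (apply lt_0_INR; apply Nat.neq_0_lt_0; apply Nat.pow_nonzero; lia).
    assert (HEs : 0 <= Es).
    { unfold Es. assert (0 < INR Y) by (apply lt_0_INR; lia).
      assert (0 <= 3 * MR / INR Y) by (unfold Rdiv; apply Rmult_le_pos; [lra|left; apply Rinv_0_lt_compat; lra]).
      assert (0 <= INR Y * INR Y ^ T / c0) by (unfold Rdiv; apply Rmult_le_pos; [apply Rmult_le_pos; [lra|apply pow_le; lra]|left; apply Rinv_0_lt_compat; lra]).
      lra. }
    unfold b. destruct (Nat.ltb_spec (P ^ 4) (S i ^ k)) as [L|L].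
    - pose proof (per_d_large alpha beta k N (Z.of_nat (S i)) Ha ltac:(lia)). fold MR in H. rewrite Eq in H.
      assert (MR / INR (S i ^ k) <= 2 * INR N * / INR (S i ^ k)).
      { unfold Rdiv. apply Rmult_le_compat_r. left; apply Rinv_0_lt_compat; auto. lra. }
      assert (0 <= Rabs (Ad alpha beta k N (Z.of_nat (S i)) - MR / INR (S i ^ k))) by apply Rabs_pos.
      rewrite Eq.
      destruct (Nat.ltb i Q); unfold Rdiv in *; nra.
    - assert (HiQ : (i < Q)%nat).
      { unfold Q. assert (S i ^ 2 <= S i ^ k)%nat by (apply Nat.pow_le_mono_r; lia).
        assert (S i * S i <= P * P * (P * P))%nat by (simpl in *; nia). nia. }
      apply Nat.ltb_lt in HiQ. rewrite HiQ.
      pose proof (per_d_small alpha beta k N c0 T Y (Z.of_nat (S i)) Ha Hc0 HY ltac:(lia) Hd). fold MR in H.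
      rewrite Eq in H.
      assert (INR (S i ^ k) <= INR Y) by (apply le_INR; unfold Y; lia).
      assert (INR (S i ^ k) * INR Y ^ T / c0 <= INR Y * INR Y ^ T / c0).
      { unfold Rdiv. apply Rmult_le_compat_r. left; apply Rinv_0_lt_compat; lra. apply Rmult_le_compat_r; auto. apply pow_le. apply pos_INR. }
      rewrite Eq. rewrite Rplus_0_r. fold Es.
      assert (Rabs (Ad alpha beta k N (Z.of_nat (S i)) - MR / INR (S i ^ k)) <= Es) by (unfold Es; lra).
      pose proof (Rabs_pos (IZR (mu (Z.of_nat (S i))))). 
      pose proof (Rabs_pos (Ad alpha beta k N (Z.of_nat (S i)) - MR / INR (S i ^ k))). nra. }
  unfold S1. eapply Rle_trans. apply sumR_abs.
  eapply Rle_trans. apply sumR_le. intros i _. apply Hb.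
  unfold b. rewrite sumR_plus. rewrite count_lt.
  rewrite (sumR_ext _ (fun i => 3 * INR N * (if Nat.ltb (P ^ 4) (S i ^ k) then / INR (S i ^ k) else 0))).
  2:{ intros i _. destruct (Nat.ltb _ _); lra. }
  rewrite sumR_scal. pose proof (big_tail k P (N * N) Hk HP). fold Q in H.
  assert (INR (Nat.min (N * N) Q) <= INR Q) by (apply le_INR; lia).
  assert (HEs : 0 <= Es).
  { unfold Es. assert (0 < INR Y) by (apply lt_0_INR; lia).
    assert (0 <= 3 * MR / INR Y) by (unfold Rdiv; apply Rmult_le_pos; [lra|left; apply Rinv_0_lt_compat; lra]).
    assert (0 <= INR Y * INR Y ^ T / c0) by (unfold Rdiv; apply Rmult_le_pos; [apply Rmult_le_pos; [lra|apply pow_le; lra]|left; apply Rinv_0_lt_compat; lra]).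
    lra. }
  assert (HPow : INR Q * (INR Y * INR Y ^ T) <= INR N / INR Q).
  { assert (INR Q * (INR Y * INR Y ^ T) * INR Q <= INR N).
    { rewrite <- pow_INR, <- !mult_INR. apply le_INR. unfold Q, Y.
      replace (P * P * (P ^ 4 * (P ^ 4) ^ T) * (P * P))%nat with (P ^ (4 * T + 8))%nat; auto.
      rewrite <- Nat.pow_mul_r. rewrite !Nat.pow_add_r. simpl. ring. }
    apply le_div; lra. }
  assert (HQQ : INR Q <= INR N / INR Q).
  { assert (INR Q * INR Q <= INR N).
    { rewrite <- mult_INR. apply le_INR. unfold Q.
      assert (P ^ 4 <= P ^ (4 * T + 8))%nat by (apply Nat.pow_le_mono_r; lia). replace (P * P * (P * P))%nat with (P ^ 4)%nat by (simpl; ring). lia. }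
    apply le_div; lra. }
  assert (HMY : INR Q * (3 * MR / INR Y) <= 6 * INR N / INR Q).
  { rewrite EY. unfold Rdiv. replace (INR Q * (3 * MR * / (INR Q * INR Q))) with (3 * MR * / INR Q) by (field; lra).
    apply Rmult_le_compat_r. left; apply Rinv_0_lt_compat; lra. lra. }
  assert (HQEs : INR Q * Es <= (7 + / c0) * INR N / INR Q).
  { unfold Es. rewrite !Rmult_plus_distr_l.
    assert (HH : INR Q * (INR Y * INR Y ^ T / c0) = INR Q * (INR Y * INR Y ^ T) * / c0) by (unfold Rdiv; ring).
    rewrite HH.
    assert (INR Q * (INR Y * INR Y ^ T) * / c0 <= INR N / INR Q * / c0).
    { apply Rmult_le_compat_r. left; apply Rinv_0_lt_compat; auto. auto. }
    unfold Rdiv in *. lra. }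
  assert (INR (Nat.min (N * N) Q) * Es <= INR Q * Es) by (apply Rmult_le_compat_r; auto).
  assert (3 * INR N * sumR (fun i => if Nat.ltb (P ^ 4) (S i ^ k) then / INR (S i ^ k) else 0) (N * N) <= 3 * INR N * (2 / INR Q)).
  { apply Rmult_le_compat_l; auto. pose proof (pos_INR N). lra. }
  unfold Rdiv in *. lra.
Qed.

End P14.
Import P14.

Module P15.
Local Open Scope R_scope.

Lemma final_ineq (N P E : nat) (K1 : R) : (3 <= N)%nat -> (1 <= P)%nat -> (1 <= E)%nat -> 0 <= K1 ->
  (N < (P + 1) ^ E)%nat ->
  K1 * INR N / INR (P * P) + 7 <= (K1 * INR E + 7) / ln (ln 3) * (INR N * ln (ln (INR N)) / ln (INR N)).
Proof.
  intros HN HP HE HK HPN.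
  pose proof lnln3 as Hlam. set (lam := ln (ln 3)) in *.
  assert (H3 : 3 <= INR N) by (replace 3 with (INR 3) by (simpl; lra); apply le_INR; lia).
  assert (Hln3 : 1 < ln 3).
  { rewrite <- (ln_exp 1). apply ln_increasing. apply exp_pos. apply exp1_lt_3. }
  assert (HlnN : ln 3 <= ln (INR N)).
  { destruct (Req_dec (INR N) 3) as [E3|E3]. rewrite E3; lra. left; apply ln_increasing; lra. }
  assert (HllN : lam <= ln (ln (INR N))).
  { unfold lam. destruct (Req_dec (ln (INR N)) (ln 3)) as [E3|E3]. rewrite E3; lra. left; apply ln_increasing; lra. }
  assert (HP' : 1 <= INR P) by (apply (le_INR 1); lia).
  assert (HQ : INR P <= INR (P * P)) by (apply le_INR; nia).
  assert (HlnP : ln (INR N) <= INR E * INR P).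
  { assert (ln (INR N) < ln (INR (P + 1) ^ E)).
    { apply ln_increasing. lra. rewrite <- pow_INR. apply lt_INR. auto. }
    rewrite ln_pow in H by (apply lt_0_INR; lia).
    assert (ln (INR (P + 1)) < INR P).
    { rewrite plus_INR, INR_1. rewrite <- (ln_exp (INR P)) at 2. apply ln_increasing. lra.
      pose proof (exp_ineq1 (INR P) ltac:(lra)). lra. }
    assert (1 <= INR E) by (apply (le_INR 1); lia). nra. }
  set (W := INR N * ln (ln (INR N)) / ln (INR N)).
  assert (Hpos : 0 < ln (INR N)) by lra.
  assert (HW1 : lam <= W).
  { unfold W. apply le_div; auto. assert (ln (INR N) < INR N) by (apply ln_lt_x; lra). nra. }
  assert (HW2 : INR N / INR (P * P) * lam <= INR E * W).
  { unfold W. assert (0 < INR (P * P)) by lra.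
    assert (INR N * lam * ln (INR N) <= INR E * INR (P * P) * (INR N * ln (ln (INR N)))).
    { assert (ln (INR N) <= INR E * INR (P * P)) by (apply Rle_trans with (INR E * INR P); auto; apply Rmult_le_compat_l; [apply pos_INR|auto]).
      assert (0 <= INR N * lam) by (pose proof (pos_INR N); nra).
      assert (0 <= INR E * INR (P * P)) by (pose proof (pos_INR E); nra).
      apply Rle_trans with (INR N * lam * (INR E * INR (P * P))). apply Rmult_le_compat_l; auto.
      rewrite Rmult_comm. apply Rmult_le_compat_l; auto. apply Rmult_le_compat_l. apply pos_INR. auto. }
    unfold Rdiv. 
    apply Rmult_le_reg_r with (INR (P * P) * ln (INR N)). nra.
    replace (INR N * / INR (P * P) * lam * (INR (P * P) * ln (INR N))) with (INR N * lam * ln (INR N)) by (field; lra).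
    replace (INR E * (INR N * ln (ln (INR N)) * / ln (INR N)) * (INR (P * P) * ln (INR N))) with (INR E * INR (P * P) * (INR N * ln (ln (INR N)))) by (field; lra).
    auto. }
  assert (HW0 : 0 <= W) by lra.
  replace ((K1 * INR E + 7) / lam * W) with (K1 * (INR E * W / lam) + 7 * (W / lam)) by (field; lra).
  assert (INR N / INR (P * P) <= INR E * W / lam) by (apply le_div; auto).
  assert (1 <= W / lam) by (apply le_div; lra).
  unfold Rdiv in *. nra.
Qed.


End P15.
Import P15.

Theorem corollary2 :
  forall alpha : R, alpha > 1 -> irrational alpha -> finite_type alpha ->
  exists C : R, forall (beta : R) (k N : nat), (2 <= k)%nat -> (3 <= N)%nat ->
    Rabs (INR (count_kfree_beatty alpha beta k N) - / alpha * / zeta_nat k * INR N)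
      <= C * (INR N * ln (ln (INR N)) / ln (INR N)).
Proof.
  intros alpha Ha Hirr Hft.
  destruct (dioph alpha Hirr Hft) as [c0 [T [Hc0 [HT Hd]]]].
  set (E := (4 * T + 8)%nat).
  exists (((13 + / c0) * INR E + 7) / ln (ln 3)).
  intros beta k N Hk HN.
  destruct (root_exists N E ltac:(lia) ltac:(unfold E; lia)) as [P [HP1 [HP2 HP3]]].
  assert (HK1 : 0 <= 13 + / c0) by (pose proof (Rinv_0_lt_compat c0 Hc0); lra).
  pose proof (final_ineq N P E (13 + / c0) HN HP1 ltac:(unfold E; lia) HK1 HP3) as HF.
  eapply Rle_trans; [|apply HF]. clear HF.
  rewrite count_decomp by (auto || lia).
  set (MR := INR (Mn alpha beta N)).
  set (z := zeta_nat k).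
  assert (Hz : 1 <= z) by (apply zeta_pos; auto).
  set (X := (N * N)%nat).
  set (Smu := S1 (fun d => IZR (mu d) / IZR d ^ k) X).
  assert (Hdec : S1 (fun d => IZR (mu d) * Ad alpha beta k N d) X - / alpha * / z * INR N =
     S1 (fun d => IZR (mu d) * (Ad alpha beta k N d - MR / IZR d ^ k)) X + MR * (Smu - / z) + (MR - INR N / alpha) * / z).
  { assert (S1 (fun d => IZR (mu d) * (Ad alpha beta k N d - MR / IZR d ^ k)) X =
            S1 (fun d => IZR (mu d) * Ad alpha beta k N d) X - MR * Smu).
    { unfold Smu, S1. rewrite <- sumR_scal, <- sumR_minus. apply sumR_ext. intros. unfold Rdiv. ring. }
    rewrite H. unfold Rdiv. field. split; lra. }
  rewrite Hdec.
  assert (HMb : Rabs (MR - INR N / alpha) <= 1).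
  { pose proof (M_bound alpha beta Ha N). unfold MR, Mn. rewrite INR_IZR_INZ, Z2Nat.id; auto.
    pose proof (gb_mono alpha beta Ha N). lia. }
  assert (HN1 : 3 <= INR N) by (replace 3 with (INR 3) by (simpl; lra); apply le_INR; lia).
  assert (HMR2 : MR <= 2 * INR N).
  { apply Rabs_le_inv2 in HMb. assert (INR N / alpha <= INR N).
    { apply Rmult_le_reg_r with alpha. lra. unfold Rdiv. rewrite Rmult_assoc, Rinv_l by lra. nra. }
    lra. }
  assert (HMR0 : 0 <= MR) by apply pos_INR.
  pose proof (E1_bound alpha beta k N c0 T P Ha Hc0 Hk HP1 Hd HMR2 HP2) as HE1.
  fold MR in HE1. fold X in HE1.
  pose proof (zeta_est k N Hk ltac:(lia)) as HZ. fold X in HZ. fold Smu in HZ. fold z in HZ.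
  assert (H2 : Rabs (MR * (Smu - / z)) <= 6).
  { rewrite Rabs_mult, (Rabs_right MR) by lra.
    apply Rle_trans with (2 * INR N * (3 / INR N)). apply Rmult_le_compat; auto. apply Rabs_pos.
    right. field. lra. }
  assert (H3 : Rabs ((MR - INR N / alpha) * / z) <= 1).
  { rewrite Rabs_mult. rewrite (Rabs_right (/ z)) by (apply Rle_ge; left; apply Rinv_0_lt_compat; lra).
    assert (/ z <= 1) by (rewrite <- Rinv_1; apply Rinv_le_contravar; lra).
    assert (0 < / z) by (apply Rinv_0_lt_compat; lra).
    pose proof (Rabs_pos (MR - INR N / alpha)). nra. }
  eapply Rle_trans. apply Rabs_triang.
  eapply Rle_trans. apply Rplus_le_compat_r. apply Rabs_triang.
  lra.
Qed.
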